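(* Let $L$ be a pretransitive logic and $h,k<\omega$, and suppose $L[h]$ is $k$-tabular. Then for each $i\le h$ there is a $k$-formula $B_{i,k}$ such that, for every point $x$ of the $k$-canonical frame of $L$, $B_{i,k}\in x$ iff the depth of $x$ is at most $i$; and for any such choice of the $B_{i,k}$ and all $k$-formulas $\varphi$, $$L[h+1]\vdash\varphi\quad\text{iff}\quad L\vdash\bigwedge_{i\le h}\Big(\Box^*(\Box^*\varphi\to B_{i,k})\to B_{i,k}\Big).$$
   Context: Logics are normal $n$-modal logics; a $k$-formula uses only $p_j$, $j<k$. $L$ is $k$-tabular if there are finitely many $k$-formulas up to $L$-equivalence. $\Diamond^0\varphi=\varphi$, $\Diamond^{i+1}\varphi=\Diamond^i(\bigvee_{j<n}\Diamond_j\varphi)$, $\Diamond^{\le m}\varphi=\bigvee_{i\le m}\Diamond^i\varphi$. $L$ is pretransitive if $L\vdash\Diamond^{m+1}p\to\Diamond^{\le m}p$ for some $m$; for the least such $m$, $\Diamond^*=\Diamond^{\le m}$, $\Box^*=\neg\Diamond^*\neg$. $B_0=\bot$, $B_{i+1}=p_{i+1}\to\Box^*(\Diamond^*p_{i+1}\vee B_i)$; $L[h]=L+B_h$. The $k$-canonical frame of a consistent $L$ has points the maximal $L$-consistent sets of $k$-formulas, $xR_iy$ iff $\Diamond_i\psi\in x$ for all $k$-formulas $\psi\in y$; $R=\bigcup R_i$, $R^*$ its reflexive transitive closure. Clusters are classes of $R^*\cap(R^* )^{-1}$, ordered by $C\le D$ iff $xR^*y$ for some $x\in C,y\in D$; the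 height of a frame is the maximal size of a chain of clusters; the depth of $x$ is the height of the restriction of the frame to $R^*(x)$. (If $L$ is inconsistent, the statement is read with the canonical frame empty.) *)

(* Defs.v *)
From Stdlib Require Import List.
From mathcomp Require Import all_boot.
Set Implicit Arguments.
Unset Strict Implicit.
Unset Printing Implicit Defensive.

Inductive form (n : nat) : Type :=
| Var : nat -> form n
| Bot : form n
| Imp : form n -> form n -> form n
| Box : 'I_n -> form n -> form n.
Arguments Bot {n}.

Section Connectives.
Variable n : nat.
Definition Neg (a : form n) : form n := Imp a Bot.
Definition Top : form n := Neg Bot.
Definition Or (a b : form n) : form n := Imp (Neg a) b.
Definition And (a b : form n) : form n := Neg (Imp a (Neg b)).
Definition Iff (a b : form n) : form n := And (Imp a b) (Imp b a).
Definition Dia (i : 'I_n) (a : form n) : form n := Neg (Box i (Neg a)).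
Definition bigOr (l : seq (form n)) : form n := foldr Or Bot l.
Definition bigAnd (l : seq (form n)) : form n := foldr And Top l.

Fixpoint subst (s : nat -> form n) (a : form n) : form n :=
  match a with
  | Var p => s p
  | Bot => Bot
  | Imp a b => Imp (subst s a) (subst s b)
  | Box i a => Box i (subst s a)
  end.

Fixpoint kform (k : nat) (a : form n) : bool :=
  match a with
  | Var p => p < k
  | Bot => true
  | Imp a b => kform k a && kform k b
  | Box _ a => kform k a
  end.

Fixpoint peval (f : form n -> bool) (a : form n) : bool :=
  match a with
  | Var _ => f a
  | Bot => false
  | Imp a b => peval f a ==> peval f b
  | Box _ _ => f a
  end.
(* substitution instances of classical tautologies *)
Definition tautology (a : form n) : Prop := forall f, peval f a = true.

Definition logic := form n -> Prop.

Definition normal (L : logic) : Prop :=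
  [/\ (forall a, tautology a -> L a),
      (forall (i : 'I_n) a b, L (Imp (Box i (Imp a b)) (Imp (Box i a) (Box i b)))),
      (forall a b, L (Imp a b) -> L a -> L b),
      (forall (i : 'I_n) a, L a -> L (Box i a))
    & (forall s a, L a -> L (subst s a))].

(* L + A : the least normal logic containing L and A *)
Definition ext (L : logic) (A : form n) : logic :=
  fun a => forall L' : logic, normal L' -> (forall b, L b -> L' b) -> L' A -> L' a.

Definition dia_any (a : form n) : form n := bigOr [seq Dia i a | i <- enum 'I_n].
Fixpoint dia_iter (i : nat) (a : form n) : form n :=
  match i with
  | 0 => a
  | i'.+1 => dia_iter i' (dia_any a)
  end.
Definition dia_le (m : nat) (a : form n) : form n :=
  bigOr [seq dia_iter i a | i <- iota 0 m.+1].

Definition pretrans_at (L : logic) (m : nat) : Prop :=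
  L (Imp (dia_iter m.+1 (Var n 0)) (dia_le m (Var n 0))).
Definition least_pretrans (L : logic) (m : nat) : Prop :=
  pretrans_at L m /\ forall m', m' < m -> ~ pretrans_at L m'.

Definition dia_star (m : nat) (a : form n) : form n := dia_le m a.
Definition box_star (m : nat) (a : form n) : form n := Neg (dia_star m (Neg a)).

Fixpoint Bform (m : nat) (i : nat) : form n :=
  match i with
  | 0 => Bot
  | i'.+1 => Imp (Var n i) (box_star m (Or (dia_star m (Var n i)) (Bform m i')))
  end.

Definition Lh (L : logic) (m h : nat) : logic := ext L (Bform m h).

Definition ktabular (L : logic) (k : nat) : Prop :=
  exists reps : seq (form n),
    all (kform k) reps /\
    forall a, kform k a -> exists2 b, List.In b reps & L (Iff a b).

Definition consistent (L : logic) (x : form n -> Prop) : Prop :=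
  forall l : seq (form n), (forall a, List.In a l -> x a) -> ~ L (Neg (bigAnd l)).

Definition kset (k : nat) (x : form n -> Prop) : Prop :=
  forall a, x a -> kform k a.

Definition cpoint (L : logic) (k : nat) (x : form n -> Prop) : Prop :=
  [/\ kset k x, consistent L x &
      forall y, kset k y -> consistent L y -> (forall a, x a -> y a) ->
                forall a, y a -> x a].

Definition Ri (L : logic) (k : nat) (i : 'I_n) (x y : form n -> Prop) : Prop :=
  cpoint L k x /\ cpoint L k y /\
  forall a, kform k a -> y a -> x (Dia i a).

Definition Rc (L : logic) (k : nat) (x y : form n -> Prop) : Prop :=
  exists i, Ri L k i x y.

Inductive Rstar (L : logic) (k : nat) : (form n -> Prop) -> (form n -> Prop) -> Prop :=
| Rstar_refl x : cpoint L k x -> Rstar L k x x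
| Rstar_step x y z : Rc L k x y -> Rstar L k y z -> Rstar L k x z.

(* depth of x is at most i: the restriction of the frame to R*(x) has no
   chain of i+1 clusters, i.e. no strictly increasing (in the cluster order)
   sequence y_0 < y_1 < ... < y_i of points of R*(x). *)
Definition depth_le (L : logic) (k : nat) (x : form n -> Prop) (i : nat) : Prop :=
  ~ exists y : nat -> (form n -> Prop),
      Rstar L k x (y 0) /\
      forall j, j < i ->
        Rstar L k (y j) (y j.+1) /\ ~ Rstar L k (y j.+1) (y j).
End Connectives.

(* Main.v *)
Require Import Defs.
From Stdlib Require Import List Classical ClassicalEpsilon FunctionalExtensionality PropExtensionality.
From mathcomp Require Import all_boot.
Set Implicit Arguments. Unset Strict Implicit. Unset Printing Implicit Defensive.


Ltac tauto_peval := let f := fresh "f" in intros f; simpl;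
  repeat match goal with
  | |- context [all ?p ?a] => destruct (all p a)
  | |- context [has ?p ?a] => destruct (has p a)
  | |- context [peval f ?a] => destruct (peval f a)
  | |- context [f ?a] => destruct (f a) end; auto.

Section Base.
Variable n : nat.
Implicit Types (a b c : form n) (l : seq (form n)).

Lemma peval_bigAnd f l : peval f (bigAnd l) = all (peval f) l.
Proof. elim: l => [|a l IH] //=. rewrite IH. by case: (peval f a); case: (all _ _). Qed.
Lemma peval_bigOr f l : peval f (bigOr l) = has (peval f) l.
Proof. elim: l => [|a l IH] //=. rewrite IH. by case: (peval f a); case: (has _ _). Qed.


Lemma all_cat_In (P : form n -> Prop) l1 l2 :
  (forall c, List.In c l1 -> P c) -> (forall c, List.In c l2 -> P c) ->
  forall c, List.In c (l1 ++ l2) -> P c.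
Proof. elim: l1 => [|a l1 IH] //= H1 H2 c [<-|Hc]; auto. Qed.

Lemma peval_cat f l1 l2 : peval f (bigAnd (l1 ++ l2)) = peval f (bigAnd l1) && peval f (bigAnd l2).
Proof. by rewrite !peval_bigAnd all_cat. Qed.

Variable L : logic n.
Hypothesis normL : normal L.

Lemma Ltaut a : tautology a -> L a.
Proof. by case: normL => H _ _ _ _; apply: H. Qed.
Lemma Lmp a b : L (Imp a b) -> L a -> L b.
Proof. by case: normL => _ _ H _ _; apply: H. Qed.
Lemma Lnec i a : L a -> L (Box i a).
Proof. by case: normL => _ _ _ H _; apply: H. Qed.
Lemma LK i a b : L (Imp (Box i (Imp a b)) (Imp (Box i a) (Box i b))).
Proof. by case: normL => _ H _ _ _; apply: H. Qed.
Lemma Lsubst s a : L a -> L (subst s a).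
Proof. by case: normL => _ _ _ _ H; apply: H. Qed.

Lemma Ltaut1 a b : L a -> tautology (Imp a b) -> L b.
Proof. move=> Ha /Ltaut H. exact: Lmp H Ha. Qed.
Lemma Ltaut2 a b c : L a -> L b -> tautology (Imp a (Imp b c)) -> L c.
Proof. move=> Ha Hb /Ltaut H. exact: Lmp (Lmp H Ha) Hb. Qed.

Lemma Lbox_mono i a b : L (Imp a b) -> L (Imp (Box i a) (Box i b)).
Proof. move=> H. exact: Lmp (LK i a b) (Lnec i H). Qed.

Lemma Ltrans a b c : L (Imp a b) -> L (Imp b c) -> L (Imp a c).
Proof. move=> H1 H2; apply: (Ltaut2 H1 H2); tauto_peval. Qed.

Lemma Ldia_mono i a b : L (Imp a b) -> L (Imp (Dia i a) (Dia i b)).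
Proof.
move=> H. have H1 : L (Imp (Neg b) (Neg a)) by apply: (Ltaut1 H); tauto_peval.
have := Lbox_mono i H1 => H2. apply: (Ltaut1 H2). rewrite /Dia. tauto_peval.
Qed.

Lemma Lbox_and i a b : L (Imp (And (Box i a) (Box i b)) (Box i (And a b))).
Proof.
have H1 : L (Imp a (Imp b (And a b))) by apply: Ltaut; tauto_peval.
have H2 := Lbox_mono i H1.
have H3 := LK i b (And a b).
apply: (Ltaut2 H2 H3). tauto_peval.
Qed.

Lemma Lbox_bigAnd i l : L (Imp (bigAnd (map (Box i) l)) (Box i (bigAnd l))).
Proof.
elim: l => [|a l IH] /=.
  have H : L (Box i (Top n)) by apply: Lnec; apply: Ltaut; tauto_peval.
  by apply: (Ltaut1 H); tauto_peval. apply: (Ltaut2 IH (Lbox_and i a (bigAnd l))). tauto_peval.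
Qed.

End Base.


Ltac tauto_with H := let f := fresh "f" in intros f; move: (H f); simpl;
  rewrite ?peval_cat;
  repeat match goal with
  | |- context [all ?p ?a] => destruct (all p a)
  | |- context [has ?p ?a] => destruct (has p a)
  | |- context [peval f ?a] => destruct (peval f a)
  | |- context [f ?a] => destruct (f a) end; try done.

Section Points.
Variable n : nat.
Implicit Types (a b c : form n) (l : seq (form n)) (x y : form n -> Prop).

Definition subl x l := forall c, List.In c l -> x c.

Lemma kform_bigAnd k l : kform k (bigAnd l) = all (kform k) l.
Proof. elim: l => [|a l IH] //=. by rewrite IH !andbT. Qed.
Lemma kform_bigOr k l : kform k (bigOr l) = all (kform k) l.
Proof. elim: l => [|a l IH] //=. by rewrite IH !andbT. Qed.

Lemma cons_sub (G : form n -> Prop) l a : (forall c, List.In c l -> G c \/ c = a) ->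
  exists l', subl G l' /\ tautology (Imp (And (bigAnd l') a) (bigAnd l)).
Proof.
elim: l => [|c l IH] H.
  by exists [::]; split=> //; tauto_peval.
have [l' [H1 H2]] : exists l', subl G l' /\ tautology (Imp (And (bigAnd l') a) (bigAnd l)).
  by apply: IH => d Hd; apply: H; right.
case: (H c (or_introl erefl)) => [Gc|->].
  exists (c :: l'); split; first by move=> d /= [<-|/H1].
  tauto_with H2.
exists l'; split=> //. tauto_with H2.
Qed.

Lemma cons_sub2 (G : form n -> Prop) (P : form n -> Prop) (g : form n -> form n) l :
  (forall c, List.In c l -> G c \/ exists d, P d /\ c = g d) ->
  exists l1 l2, subl G l1 /\ subl P l2 /\
    tautology (Imp (And (bigAnd l1) (bigAnd (map g l2))) (bigAnd l)).
Proof.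
elim: l => [|c l IH] H.
  by exists [::], [::]; split=> //; split => //; tauto_peval.
have [l1 [l2 [H1 [H2 H3]]]] : exists l1 l2, subl G l1 /\ subl P l2 /\
    tautology (Imp (And (bigAnd l1) (bigAnd (map g l2))) (bigAnd l)).
  by apply: IH => d Hd; apply: H; right.
case: (H c (or_introl erefl)) => [Gc|[d [Pd ->]]].
  exists (c :: l1), l2; split; first by move=> e /= [<-|/H1].
  split => //. tauto_with H3.
exists l1, (d :: l2); split=> //; split; first by move=> e /= [<-|/H2].
tauto_with H3.
Qed.

Variable L : logic n.
Hypothesis normL : normal L.
Variable k : nat.

Section Pt.
Variable x : form n -> Prop.
Hypothesis Hx : cpoint L k x.

Lemma pt_kset a : x a -> kform k a.
Proof. by case: Hx => H _ _; apply: H. Qed.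
Lemma pt_consist l : subl x l -> ~ L (Neg (bigAnd l)).
Proof. by case: Hx => _ H _; apply: H. Qed.
Lemma pt_max y : kset k y -> consistent L y -> (forall a, x a -> y a) -> forall a, y a -> x a.
Proof. by case: Hx => _ _ H; apply: H. Qed.

Lemma pt_closed l b : kform k b -> subl x l -> L (Imp (bigAnd l) b) -> x b.
Proof.
move=> Kb Hl Hlb.
apply: (@pt_max (fun c => x c \/ c = b)); last by right.
- by move=> c [/pt_kset|->].
- move=> l2 Hl2 HL.
  have [l' [H1 H2]] := cons_sub Hl2.
  apply: (@pt_consist (l ++ l')); first exact: all_cat_In.
  apply: (Ltaut2 normL Hlb HL). tauto_with H2.
- by move=> a Ha; left.
Qed.

Lemma pt_thm a : kform k a -> L a -> x a.
Proof.
move=> Ka La. apply: (@pt_closed [::]) => //. apply: (Ltaut1 normL La). tauto_peval.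
Qed.
Lemma pt_mp a b : x a -> kform k b -> L (Imp a b) -> x b.
Proof.
move=> Ha Kb Hab. apply: (@pt_closed [:: a]) => //; first by move=> c [<-|].
apply: (Ltaut1 normL Hab). tauto_peval.
Qed.
Lemma pt_mp2 a b c : x a -> x b -> kform k c -> L (Imp a (Imp b c)) -> x c.
Proof.
move=> Ha Hb Kc Hab. apply: (@pt_closed [:: a; b]) => //; first by move=> d [<-|[<-|]].
apply: (Ltaut1 normL Hab). tauto_peval.
Qed.
Lemma pt_not_both a : x a -> x (Neg a) -> False.
Proof.
move=> H1 H2. apply: (@pt_consist [:: a; Neg a]); first by move=> d [<-|[<-|]].
apply: (Ltaut normL). tauto_peval.
Qed.
Lemma pt_bot : ~ x Bot.
Proof.
move=> H. apply: (@pt_consist [:: Bot]); first by move=> d [<-|].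
apply: (Ltaut normL). tauto_peval.
Qed.

Lemma pt_compl a : kform k a -> x a \/ x (Neg a).
Proof.
move=> Ka. case: (classic (x a)) => Ha; [by left|right].
apply: (@pt_max (fun c => x c \/ c = Neg a)); last by right.
- by move=> c [/pt_kset|->] //=; rewrite andbT.
- move=> l2 Hl2 HL. apply: Ha.
  have [l' [H1 H2]] := cons_sub Hl2.
  apply: (@pt_closed l') => //. apply: (Ltaut1 normL HL). tauto_with H2.
- by move=> c Hc; left.
Qed.

Lemma pt_neg a : kform k a -> (x (Neg a) <-> ~ x a).
Proof.
move=> Ka; split; first by move=> H1 H2; exact: pt_not_both H2 H1.
by move=> H; case: (pt_compl Ka).
Qed.

Lemma pt_imp a b : kform k a -> kform k b -> (x (Imp a b) <-> (x a -> x b)).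
Proof.
move=> Ka Kb; split.
  move=> H1 H2. apply: (pt_mp2 H1 H2) => //. apply: (Ltaut normL); tauto_peval.
move=> H. have Kab : kform k (Imp a b) by rewrite /= Ka Kb.
case: (pt_compl Ka) => Ha.
  apply: (pt_mp (H Ha)) => //. apply: (Ltaut normL); tauto_peval.
apply: (pt_mp Ha) => //. apply: (Ltaut normL); tauto_peval.
Qed.

Lemma pt_and a b : kform k a -> kform k b -> (x (And a b) <-> (x a /\ x b)).
Proof.
move=> Ka Kb; split.
  move=> H; split; apply: (pt_mp H) => //; apply: (Ltaut normL); tauto_peval.
case=> H1 H2. apply: (pt_mp2 H1 H2); first by rewrite /= Ka Kb.
apply: (Ltaut normL); tauto_peval.
Qed.

Lemma pt_or a b : kform k a -> kform k b -> (x (Or a b) <-> (x a \/ x b)).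
Proof.
move=> Ka Kb; rewrite /Or pt_imp ?pt_neg //=; last by rewrite Ka.
by split; [move=> H; case: (classic (x a)) => Ha; [left|right; apply: H]|case=> H1 H2].
Qed.

Lemma pt_bigAnd l : all (kform k) l -> (x (bigAnd l) <-> subl x l).
Proof.
elim: l => [|a l IH] /=.
  move=> _; split; [by move=> _ c []|move=> _; apply: pt_thm => //; apply: (Ltaut normL); tauto_peval].
case/andP=> Ka Kl. rewrite pt_and ?IH ?kform_bigAnd //.
split; first by case=> H1 H2 c [<-|/H2].
by move=> H; split; [apply: H; left|move=> c Hc; apply: H; right].
Qed.

Lemma pt_bigOr l : all (kform k) l -> (x (bigOr l) <-> exists c, List.In c l /\ x c).
Proof.
elim: l => [|a l IH] /=.
  move=> _; split; [by move/pt_bot|by case=> c []].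
case/andP=> Ka Kl. rewrite pt_or ?IH ?kform_bigOr //.
split; first by case=> [H|[c [H1 H2]]]; [exists a; split=> //; left|exists c; split=> //; right].
by case=> c [[<-|H1] H2]; [left|right; exists c].
Qed.

End Pt.
End Points.


Section Enum.
Variable n : nat.

Fixpoint fenc (a : form n) : GenTree.tree nat :=
  match a with
  | Var p => GenTree.Node 0 [:: GenTree.Leaf p]
  | Bot => GenTree.Node 1 [::]
  | Imp a b => GenTree.Node 2 [:: fenc a; fenc b]
  | Box i a => GenTree.Node 3 [:: GenTree.Leaf (nat_of_ord i); fenc a]
  end.

Fixpoint fdec (t : GenTree.tree nat) : option (form n) :=
  match t with
  | GenTree.Node 0 [:: GenTree.Leaf p] => Some (Var n p)
  | GenTree.Node 1 [::] => Some Bot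
  | GenTree.Node 2 [:: ta; tb] =>
      match fdec ta, fdec tb with Some a, Some b => Some (Imp a b) | _, _ => None end
  | GenTree.Node 3 [:: GenTree.Leaf i; ta] =>
      match insub i, fdec ta with Some i', Some a => Some (Box i' a) | _, _ => None end
  | _ => None
  end.

Lemma fencK : pcancel fenc fdec.
Proof.
elim=> [p| |a IHa b IHb|i a IHa] //=; first by rewrite IHa IHb.
by rewrite valK IHa.
Qed.

Definition fenum (j : nat) : form n :=
  match @unpickle (GenTree.tree nat) j with
  | Some t => odflt Bot (fdec t)
  | None => Bot end.

Lemma fenum_surj a : exists j, fenum j = a.
Proof. exists (pickle (fenc a)). by rewrite /fenum pickleK fencK. Qed.

End Enum.

Section Lind.
Variable n : nat.
Variable Lg : logic n.
Variable k : nat.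

Lemma cons_anti (y y' : form n -> Prop) : (forall a, y a -> y' a) -> consistent Lg y' -> consistent Lg y.
Proof. move=> H Hc l Hl. apply: Hc => a /Hl; exact: H. Qed.

Variable G : form n -> Prop.
Hypothesis HGk : kset k G.
Hypothesis HGc : consistent Lg G.

Fixpoint lch (j : nat) : form n -> Prop :=
  match j with
  | 0 => G
  | j'.+1 => fun c => lch j' c \/
      (c = fenum n j' /\ kform k c /\ consistent Lg (fun d => lch j' d \/ d = fenum n j'))
  end.

Lemma lch_mono j j' c : j <= j' -> lch j c -> lch j' c.
Proof.
elim: j' => [|j' IH]; first by rewrite leqn0 => /eqP ->.
rewrite leq_eqVlt => /orP [/eqP -> //|Hj] Hc /=. left; exact: IH.
Qed.

Lemma lch_ok j : consistent Lg (lch j) /\ kset k (lch j).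
Proof.
elim: j => [|j [IHc IHk]] //=.
case: (classic (kform k (fenum n j) /\ consistent Lg (fun d => lch j d \/ d = fenum n j))) => [[Kj Cj]|Hn].
  split.
    apply: (cons_anti _ Cj) => a [Ha|[-> _]]; by [left|right].
  by move=> a [/IHk|[-> [Ka _]]].
split.
  apply: (cons_anti _ IHc) => a [Ha|[Ha [Ka Ca]]] //. by case: Hn; subst a; split.
by move=> a [/IHk|[-> [Ka Ca]]] //; case: Hn; split.
Qed.

Definition lind (c : form n) : Prop := exists j, lch j c.

Lemma lind_bound l : subl lind l -> exists N, subl (lch N) l.
Proof.
elim: l => [|a l IH] H; first by exists 0.
have [N HN] : exists N, subl (lch N) l by apply: IH => c Hc; apply: H; right.
have [j Hj] := H a (or_introl erefl).
exists (maxn N j) => c [<-|Hc].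
  apply: lch_mono Hj; exact: leq_maxr.
apply: lch_mono (HN _ Hc); exact: leq_maxl.
Qed.

Lemma lind_point : cpoint Lg k lind /\ (forall a, G a -> lind a).
Proof.
split; last by move=> a Ha; exists 0.
split.
- by move=> a [j Hj]; case: (lch_ok j) => _; apply.
- move=> l /lind_bound [N HN]. by case: (lch_ok N) => Hc _; apply: Hc.
- move=> y Ky Cy Hxy a Ha.
  have [j Hj] := fenum_surj a. subst a.
  exists j.+1; right; split; first by [].
  split; first by apply: Ky.
  apply: (cons_anti _ Cy) => d [Hd|->]; last by [].
  by apply: Hxy; exists j.
Qed.
End Lind.

Lemma lindenbaum n (Lg : logic n) k (G : form n -> Prop) :
  kset k G -> consistent Lg G -> exists x, cpoint Lg k x /\ forall a, G a -> x a.
Proof. move=> HK HC. exists (lind Lg k G). exact: lind_point. Qed.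


Lemma In_map_iff (A B : Type) (f : A -> B) (l : seq A) c :
  List.In c (map f l) <-> exists d, List.In d l /\ c = f d.
Proof.
elim: l => [|a l IH] /=; first by split=> // [[d []]].
split.
  case=> [<-|/IH [d [H1 H2]]]; first by exists a; split=> //; left.
  by exists d; split=> //; right.
by case=> d [[<-|H1] H2]; [left|right; apply/IH; exists d].
Qed.

Lemma In_mem (T : eqType) (x : T) (s : seq T) : List.In x s <-> x \in s.
Proof.
elim: s => [|a s IH] //=; rewrite in_cons.
split; first by case=> [->|/IH ->]; rewrite ?eqxx ?orbT.
by case/orP => [/eqP ->|/IH]; [left|right].
Qed.

Lemma all_In (T : Type) (p : pred T) (l : seq T) : all p l <-> (forall c, List.In c l -> p c).
Proof.
elim: l => [|a l IH] //=. split.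
  by case/andP => Ha /IH Hl c [<-|/Hl].
move=> H. rewrite H /=; last by left. by apply/IH => c Hc; apply: H; right.
Qed.

Section Modal.
Variable n : nat.
Implicit Types (a b c : form n) (l : seq (form n)) (x y z : form n -> Prop).
Variable L : logic n.
Hypothesis normL : normal L.
Variable k : nat.

Lemma kform_Neg a : kform k (Neg a) = kform k a.
Proof. by rewrite /= andbT. Qed.
Lemma kform_Dia i a : kform k (Dia i a) = kform k a.
Proof. by rewrite /= !andbT. Qed.
Lemma kform_dia_any a : kform k a -> kform k (dia_any a).
Proof.
move=> Ka. rewrite /dia_any kform_bigOr. apply/all_In => c /In_map_iff [i [_ ->]].
by rewrite kform_Dia.
Qed.
Lemma dia_iter_S j a : dia_iter j.+1 a = dia_any (dia_iter j a).
Proof. by elim: j a => [|j IH] a //=; rewrite -IH. Qed.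
Lemma kform_dia_iter j a : kform k a -> kform k (dia_iter j a).
Proof. elim: j a => [|j IH] a Ka //=. apply: IH. exact: kform_dia_any. Qed.
Lemma kform_dia_le m a : kform k a -> kform k (dia_le m a).
Proof.
move=> Ka. rewrite /dia_le kform_bigOr. apply/all_In => c /In_map_iff [i [_ ->]].
exact: kform_dia_iter.
Qed.
Lemma kform_box_star m a : kform k a -> kform k (box_star m a).
Proof. move=> Ka. rewrite /box_star kform_Neg. apply: kform_dia_le. by rewrite kform_Neg. Qed.
Lemma kform_dia_star m a : kform k a -> kform k (dia_star m a).
Proof. exact: kform_dia_le. Qed.

Lemma box_succ x y i : cpoint L k x -> cpoint L k y ->
  (forall b, kform k b -> x (Box i b) -> y b) -> Ri L k i x y.
Proof.
move=> Hx Hy H. do 2 (split => //). move=> c Kc Hc.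
have KD : kform k (Dia i c) by rewrite kform_Dia.
case: (pt_compl normL Hx KD) => // HN.
have : x (Box i (Neg c)).
  apply: (pt_mp normL Hx HN); first by rewrite /= Kc.
  apply: (Ltaut normL). rewrite /Dia. tauto_peval.
move/H. rewrite kform_Neg => /(_ Kc) Hn. case: (pt_not_both normL Hy Hc Hn).
Qed.

Lemma exists_succ x i a : cpoint L k x -> kform k a -> x (Dia i a) ->
  exists y, Ri L k i x y /\ y a.
Proof.
move=> Hx Ka Hd.
have [y [Hy HG]] : exists y, cpoint L k y /\
   forall c, (c = a \/ (kform k c /\ x (Box i c))) -> y c.
  apply: lindenbaum; first by move=> c [->|[]].
  move=> l Hl HL.
  have [l' [H1 H2]] := @cons_sub _ (fun c => kform k c /\ x (Box i c)) l a
     (fun c Hc => match Hl c Hc with or_introl e => or_intror e | or_intror h => or_introl h end).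
  have H3 : L (Imp (bigAnd l') (Neg a)) by apply: (Ltaut1 normL HL); tauto_with H2.
  have H4 := Ltrans normL (Lbox_bigAnd normL i l') (Lbox_mono normL i H3).
  have Hb : x (Box i (Neg a)).
    apply: (pt_closed normL Hx _ _ H4); first by rewrite /= Ka.
    move=> c /In_map_iff [d [Hd' ->]]. exact: (proj2 (H1 d Hd')).
  exact: (pt_not_both normL Hx Hb Hd).
exists y; split; last by apply: HG; left.
apply: box_succ => // b Kb Hb. by apply: HG; right; split.
Qed.

Lemma box_truth x i a : cpoint L k x -> kform k a ->
  (x (Box i a) <-> forall y, Ri L k i x y -> y a).
Proof.
move=> Hx Ka; have KN : kform k (Neg a) by rewrite kform_Neg.
split.
  move=> Hb y [_ [Hy HR]].
  case: (pt_compl normL Hy Ka) => // Hn.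
  have Hd := HR _ KN Hn.
  have Hb' : x (Box i (Neg (Neg a))).
    apply: (pt_mp normL Hx Hb); first by rewrite /= Ka.
    apply: Lbox_mono normL _ _ _ _. apply: (Ltaut normL); tauto_peval.
  case: (pt_not_both normL Hx Hb' Hd).
move=> H.
have KB : kform k (Box i a) by [].
case: (pt_compl normL Hx KB) => // Hn.
have Hd : x (Dia i (Neg a)).
  apply: (pt_mp normL Hx Hn); first by rewrite kform_Dia kform_Neg.
  have Hm : L (Imp (Box i (Neg (Neg a))) (Box i a)).
    apply: Lbox_mono normL _ _ _ _. apply: (Ltaut normL); tauto_peval.
  apply: (Ltaut1 normL Hm). rewrite /Dia. tauto_peval.
have [y [HR Hy]] := exists_succ Hx KN Hd.
have Hya := H y HR. case: HR => _ [Hy' _]. case: (pt_not_both normL Hy' Hya Hy).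
Qed.
End Modal.


Lemma taut_bigAnd_In n (l : seq (form n)) d : List.In d l -> tautology (Imp (bigAnd l) d).
Proof.
move=> Hd f /=. rewrite peval_bigAnd.
case E: (all _ _) => //=. by move/all_In: E => /(_ d Hd) ->.
Qed.

Lemma finite_dir n (I : Type) (s : seq I) (Y : form n -> Prop) (P : I -> form n -> Prop) :
  Y (Top n) -> (forall a b, Y a -> Y b -> Y (And a b)) ->
  (forall i a b, Y a -> Y b -> P i a -> P i (And a b)) ->
  (forall i a b, Y a -> Y b -> P i b -> P i (And a b)) ->
  (forall i, exists a, Y a /\ P i a) -> exists a, Y a /\ forall i, List.In i s -> P i a.
Proof.
move=> HT HA HP1 HP2 H. elim: s => [|i s [a [Ya Ha]]]; first by exists (Top n).
have [b [Yb Hb]] := H i. exists (And b a); split; first exact: HA.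
move=> j /= [<-|Hj]; [exact: HP1|exact: HP2 (Ha j Hj)].
Qed.

Section Canon.
Variable n : nat.
Implicit Types (a b c : form n) (l : seq (form n)) (x y z : form n -> Prop).
Variable L : logic n.
Hypothesis normL : normal L.
Variable k : nat.

Lemma dia_any_truth x a : cpoint L k x -> kform k a ->
  (x (dia_any a) <-> exists y, Rc L k x y /\ y a).
Proof.
move=> Hx Ka.
have Kl : all (kform k) [seq Dia i a | i <- enum 'I_n].
  by rewrite -kform_bigOr; exact: kform_dia_any.
rewrite /dia_any (pt_bigOr normL Hx Kl).
split.
  case=> c [/In_map_iff [i [_ ->]] Hc].
  have [y [H1 H2]] := exists_succ normL Hx Ka Hc. by exists y; split => //; exists i.
case=> y [[i [H1 [H2 H3]]] Hy]. exists (Dia i a); split; last exact: H3.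
apply/In_map_iff; exists i; split => //. by apply/In_mem; rewrite mem_enum.
Qed.

Fixpoint Rn (j : nat) x y : Prop :=
  match j with
  | 0 => cpoint L k x /\ x = y
  | j'.+1 => exists z, Rc L k x z /\ Rn j' z y
  end.

Lemma Rc_pt x y : Rc L k x y -> cpoint L k x /\ cpoint L k y.
Proof. by case=> i [H1 [H2 _]]. Qed.

Lemma Rn_pt j x y : Rn j x y -> cpoint L k x /\ cpoint L k y.
Proof.
elim: j x => [|j IH] x /=; first by case=> H <-.
case=> z [/Rc_pt [H1 H2] /IH [_ H3]] //.
Qed.

Lemma dia_iter_truth j x a : cpoint L k x -> kform k a ->
  (x (dia_iter j a) <-> exists y, Rn j x y /\ y a).
Proof.
elim: j x => [|j IH] x Hx Ka.
  by split; [move=> H; exists x|case=> y [[_ <-] H]].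
rewrite dia_iter_S dia_any_truth //; last exact: kform_dia_iter.
split.
  case=> z [Hxz Hz]. have [_ Hz'] := Rc_pt Hxz.
  have [y [H1 H2]] := (IH z Hz' Ka).1 Hz. by exists y; split => //; exists z.
case=> y [[z [Hxz Hzy]] Hy]. have [_ Hz'] := Rc_pt Hxz.
exists z; split => //. apply/(IH z Hz' Ka). by exists y.
Qed.

Lemma dia_iter_mono j x a b : cpoint L k x -> kform k a -> kform k b -> L (Imp a b) ->
  x (dia_iter j a) -> x (dia_iter j b).
Proof.
move=> Hx Ka Kb Hab /(dia_iter_truth j Hx Ka) [y [Hy Ha]].
apply/(dia_iter_truth j Hx Kb). exists y; split => //.
have [_ Hy'] := Rn_pt Hy. exact: (pt_mp normL Hy' Ha Kb Hab).
Qed.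

Lemma not_cons_ex (G : form n -> Prop) : ~ consistent L G -> exists l, subl G l /\ L (Neg (bigAnd l)).
Proof.
move=> H. apply: NNPP => H'. apply: H => l Hl HL. apply: H'. by exists l.
Qed.

Lemma step_compact j x y : cpoint L k x -> cpoint L k y ->
  (forall psi, kform k psi -> y psi -> x (dia_any (dia_iter j psi))) ->
  exists z, Rc L k x z /\ (forall psi, kform k psi -> y psi -> z (dia_iter j psi)).
Proof.
move=> Hx Hy Hxy. apply: NNPP => Hno.
pose Y := fun psi => kform k psi /\ y psi.
pose P := fun (i : 'I_n) psi => x (Box i (Neg (dia_iter j psi))).
have HPm : forall i a b, Y a -> Y b -> P i a -> P i (And a b).
  move=> i a b [Ka _] [Kb _]. rewrite /P.
  have Kab : kform k (And a b) by rewrite /= Ka Kb.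
  rewrite !(box_truth normL i Hx) //; try by rewrite kform_Neg kform_dia_iter.
  move=> H z Hz. have [_ [Hz' _]] := Hz.
  rewrite (pt_neg normL Hz') ?kform_dia_iter // => Habz. move: (H z Hz).
  rewrite (pt_neg normL Hz') ?kform_dia_iter //; apply.
  apply: (dia_iter_mono Hz' Kab Ka _ Habz). apply: (Ltaut normL); tauto_peval.
have HPm2 : forall i a b, Y a -> Y b -> P i b -> P i (And a b).
  move=> i a b [Ka _] [Kb _]. rewrite /P.
  have Kab : kform k (And a b) by rewrite /= Ka Kb.
  rewrite !(box_truth normL i Hx) //; try by rewrite kform_Neg kform_dia_iter.
  move=> H z Hz. have [_ [Hz' _]] := Hz.
  rewrite (pt_neg normL Hz') ?kform_dia_iter // => Habz. move: (H z Hz).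
  rewrite (pt_neg normL Hz') ?kform_dia_iter //; apply.
  apply: (dia_iter_mono Hz' Kab Kb _ Habz). apply: (Ltaut normL); tauto_peval.
have Hall : forall i, exists psi, Y psi /\ P i psi.
  move=> i.
  pose G := fun c => (kform k c /\ x (Box i c)) \/ exists d, Y d /\ c = dia_iter j d.
  case: (classic (consistent L G)) => HG.
    have [z [Hz HzG]] : exists z, cpoint L k z /\ forall c, G c -> z c.
      apply: lindenbaum => //. move=> c [[]//|[d [[Kd _] ->]]]. exact: kform_dia_iter.
    case: Hno. exists z; split.
      exists i. apply: box_succ => // b Kb Hb. by apply: HzG; left.
    move=> psi Kp Hp. apply: HzG; right. by exists psi.
  have [l [Hl HL]] := not_cons_ex HG.
  have [l1 [l2 [H1 [H2 H3]]]] := @cons_sub2 _ (fun c => kform k c /\ x (Box i c)) Y (dia_iter j) l Hl.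
  have Kl2 : all (kform k) l2 by apply/all_In => c /H2 [].
  have Kl1 : all (kform k) l1 by apply/all_In => c /H1 [].
  have Kl : all (kform k) l.
    apply/all_In => c /Hl [[]//|[d [[Kd _] ->]]]. exact: kform_dia_iter.
  exists (bigAnd l2); split.
    split; first by rewrite kform_bigAnd.
    apply/(pt_bigAnd normL Hy Kl2) => c /H2 []//.
  have Kd : kform k (Neg (dia_iter j (bigAnd l2))) by rewrite kform_Neg kform_dia_iter // kform_bigAnd.
  rewrite /P (box_truth normL i Hx Kd).
  move=> z Hz. have [_ [Hz' _]] := Hz.
  rewrite (pt_neg normL Hz') ?kform_dia_iter ?kform_bigAnd // => Hzd.
  have Z1 : z (bigAnd l1).
    apply/(pt_bigAnd normL Hz' Kl1) => c /H1 [Kc Hc].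
    by move/(box_truth normL i Hx Kc): Hc; apply.
  have Z2 : z (bigAnd (map (dia_iter j) l2)).
    have Km : all (kform k) (map (dia_iter j) l2).
      apply/all_In => c /In_map_iff [d [Hd ->]]. apply: kform_dia_iter.
      by move/all_In: Kl2; apply.
    apply/(pt_bigAnd normL Hz' Km) => c /In_map_iff [d [Hd ->]].
    apply: (dia_iter_mono Hz' _ _ _ Hzd); first by rewrite kform_bigAnd.
      by move/all_In: Kl2; apply.
    apply: (Ltaut normL). exact: taut_bigAnd_In.
  have Z3 : z (bigAnd l).
    apply: (pt_mp2 normL Hz' Z1 Z2); first by rewrite kform_bigAnd.
    apply: (Ltaut normL). tauto_with H3.
  have Z4 : z (Neg (bigAnd l)) by apply: (pt_thm normL Hz') => //; rewrite kform_Neg kform_bigAnd.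
  exact: (pt_not_both normL Hz' Z3 Z4).
have HT : Y (Top n).
  split => //. apply: (pt_thm normL Hy) => //. apply: (Ltaut normL); tauto_peval.
have HA : forall a b, Y a -> Y b -> Y (And a b).
  move=> a b [Ka Ha] [Kb Hb]; split; first by rewrite /= Ka Kb.
  by apply/(pt_and normL Hy Ka Kb).
have [psi [[Kp Hp] HP]] := finite_dir (enum 'I_n) HT HA HPm HPm2 Hall.
have := Hxy psi Kp Hp. rewrite dia_any_truth ?kform_dia_iter //.
case=> z [[i Hi] Hz]. have := HP i. rewrite /P (box_truth normL i Hx) ?kform_Neg ?kform_dia_iter //.
have Hin : List.In i (enum 'I_n) by apply/In_mem; rewrite mem_enum.
move=> /(_ Hin) H. have {H} := H z Hi.
have [_ [Hz' _]] := Hi. by rewrite (pt_neg normL Hz') ?kform_dia_iter.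
Qed.

Lemma Rn_char j x y : cpoint L k x -> cpoint L k y ->
  (forall psi, kform k psi -> y psi -> x (dia_iter j psi)) -> Rn j x y.
Proof.
elim: j x => [|j IH] x Hx Hy H /=.
  split => //. apply: functional_extensionality => a. apply: propositional_extensionality.
  have Hyx : forall a, y a -> x a by move=> b Hb; apply: H => //; exact: (pt_kset Hy Hb).
  split; last exact: Hyx.
  apply: (pt_max Hy); [by move=> b /(pt_kset Hx)|by case: Hx|exact: Hyx].
have [z [Hxz Hz]] : exists z, Rc L k x z /\ (forall psi, kform k psi -> y psi -> z (dia_iter j psi)).
  apply: step_compact => // psi Kp Hp. rewrite -dia_iter_S. exact: H.
exists z; split => //. apply: IH => //. by case: (Rc_pt Hxz).
Qed.

Lemma dia_le_truth m x a : cpoint L k x -> kform k a ->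
  (x (dia_le m a) <-> exists j, j <= m /\ x (dia_iter j a)).
Proof.
move=> Hx Ka.
have Kl : all (kform k) [seq dia_iter i a | i <- iota 0 m.+1].
  by rewrite -kform_bigOr; exact: kform_dia_le.
rewrite /dia_le (pt_bigOr normL Hx Kl).
split.
  case=> c [/In_map_iff [j [Hj ->]] Hc]. exists j; split => //.
  by move/In_mem: Hj; rewrite mem_iota add0n ltnS.
case=> j [Hj Hc]. exists (dia_iter j a); split => //.
apply/In_map_iff; exists j; split => //. by apply/In_mem; rewrite mem_iota add0n ltnS.
Qed.

Variable m : nat.
Definition Rle x y := exists j, j <= m /\ Rn j x y.

Lemma Rle_char x y : cpoint L k x -> cpoint L k y ->
  (Rle x y <-> forall psi, kform k psi -> y psi -> x (dia_star m psi)).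
Proof.
move=> Hx Hy; split.
  case=> j [Hj Hn] psi Kp Hp. rewrite /dia_star dia_le_truth //.
  exists j; split => //. apply/(dia_iter_truth j Hx Kp). by exists y.
move=> H. apply: NNPP => Hno.
pose Y := fun psi => kform k psi /\ y psi.
pose P := fun (j : nat) psi => j <= m -> ~ x (dia_iter j psi).
have HT : Y (Top n).
  split => //. apply: (pt_thm normL Hy) => //. apply: (Ltaut normL); tauto_peval.
have HA : forall a b, Y a -> Y b -> Y (And a b).
  move=> a b [Ka Ha] [Kb Hb]; split; first by rewrite /= Ka Kb.
  by apply/(pt_and normL Hy Ka Kb).
have HP1 : forall i a b, Y a -> Y b -> P i a -> P i (And a b).
  move=> i a b [Ka _] [Kb _] Hp Hi Hd. apply: (Hp Hi).
  apply: (dia_iter_mono Hx _ Ka _ Hd); first by rewrite /= Ka Kb.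
  apply: (Ltaut normL); tauto_peval.
have HP2 : forall i a b, Y a -> Y b -> P i b -> P i (And a b).
  move=> i a b [Ka _] [Kb _] Hp Hi Hd. apply: (Hp Hi).
  apply: (dia_iter_mono Hx _ Kb _ Hd); first by rewrite /= Ka Kb.
  apply: (Ltaut normL); tauto_peval.
have Hall : forall j, exists a, Y a /\ P j a.
  move=> j. case: (leqP j m) => Hjm; last first.
    exists (Top n); split => // Hc. by rewrite leqNgt Hjm in Hc.
  apply: NNPP => Hn. apply: Hno. exists j; split => //.
  apply: Rn_char => // psi Kp Hp. apply: NNPP => Hd. apply: Hn.
  by exists psi; split.
have [psi [[Kp Hp] HP]] := finite_dir (iota 0 m.+1) HT HA HP1 HP2 Hall.
have := H psi Kp Hp. rewrite /dia_star dia_le_truth //. case=> j [Hj Hd].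
have Hin : List.In j (iota 0 m.+1) by apply/In_mem; rewrite mem_iota add0n ltnS.
exact: (HP j Hin Hj Hd).
Qed.
End Canon.


Section Subst.
Variable n : nat.
Implicit Types (a b c : form n) (l : seq (form n)).
Lemma subst_bigOr s l : subst s (bigOr l) = bigOr (map (subst s) l).
Proof. by elim: l => [|a l IH] //=; rewrite IH. Qed.
Lemma subst_bigAnd s l : subst s (bigAnd l) = bigAnd (map (subst s) l).
Proof. by elim: l => [|a l IH] //=; rewrite IH. Qed.
Lemma subst_dia_any s a : subst s (dia_any a) = dia_any (subst s a).
Proof. rewrite /dia_any subst_bigOr -map_comp. by congr bigOr; apply: eq_map. Qed.
Lemma subst_dia_iter s j a : subst s (dia_iter j a) = dia_iter j (subst s a).
Proof. by elim: j a => [|j IH] a //=; rewrite IH subst_dia_any. Qed.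
Lemma subst_dia_le s m a : subst s (dia_le m a) = dia_le m (subst s a).
Proof. rewrite /dia_le subst_bigOr -map_comp. congr bigOr; apply: eq_map => j /=. exact: subst_dia_iter. Qed.
Lemma subst_box_star s m a : subst s (box_star m a) = box_star m (subst s a).
Proof.
rewrite /box_star /dia_star.
change (Neg (subst s (dia_le m (Neg a))) = Neg (dia_le m (Neg (subst s a)))).
by rewrite subst_dia_le.
Qed.
Lemma subst_dia_star s m a : subst s (dia_star m a) = dia_star m (subst s a).
Proof. exact: subst_dia_le. Qed.
End Subst.

Section Star.
Variable n : nat.
Implicit Types (a b c : form n) (l : seq (form n)) (x y z : form n -> Prop).
Variable L : logic n.
Hypothesis normL : normal L.
Variable k : nat.
Variable m : nat.
Hypothesis Hpt : pretrans_at L m.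

Lemma pretrans_inst psi : L (Imp (dia_iter m.+1 psi) (dia_le m psi)).
Proof.
have H := Lsubst normL (fun _ => psi) Hpt.
change (L (Imp (subst (fun _ => psi) (dia_iter m.+1 (Var n 0))) (subst (fun _ => psi) (dia_le m (Var n 0))))) in H.
by rewrite subst_dia_iter subst_dia_le in H.
Qed.

Lemma Rstar_pts x y : Rstar L k x y -> cpoint L k x /\ cpoint L k y.
Proof. elim=> [z Hz|x0 y0 z0 H1 _ [_ H2]] //. by case: (Rc_pt H1). Qed.

Lemma Rn_Rstar j x y : Rn L k j x y -> Rstar L k x y.
Proof.
elim: j x => [|j IH] x /=; first by case=> Hx <-; constructor.
case=> z [H1 H2]. apply: Rstar_step H1 _. exact: IH.
Qed.

Lemma Rstar_trans x y z : Rstar L k x y -> Rstar L k y z -> Rstar L k x z.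
Proof. elim=> [w _|x0 y0 z0 H1 _ IH] // H. apply: Rstar_step H1 _. exact: IH. Qed.

Lemma Rstar_Rc x y z : Rstar L k x y -> Rc L k y z -> Rstar L k x z.
Proof.
move=> H1 H2. apply: (Rstar_trans H1). apply: (Rstar_step H2). constructor.
by case: (Rc_pt H2).
Qed.

Lemma Rstar_short x y : Rstar L k x y -> Rle L k m x y.
Proof.
elim=> [z Hz|x0 y0 z0 H1 H2 [j [Hj Hn]]]; first by exists 0.
have [Hx0 _] := Rc_pt H1. have [_ Hz0] := Rstar_pts H2.
have Hn1 : Rn L k j.+1 x0 z0 by exists y0.
case: (leqP j.+1 m) => Hjm; first by exists j.+1.
have Ejm : j = m by apply/eqP; rewrite eqn_leq Hj -ltnS.
subst j. apply/(Rle_char normL m Hx0 Hz0) => psi Kp Hp.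
apply: (pt_mp normL Hx0 _ (kform_dia_le m Kp) (pretrans_inst psi)).
apply/(dia_iter_truth normL m.+1 Hx0 Kp). by exists z0.
Qed.

Lemma Rle_Rstar x y : Rle L k m x y -> Rstar L k x y.
Proof. by case=> j [_ /Rn_Rstar]. Qed.

Lemma Rstar_char x y : cpoint L k x -> cpoint L k y ->
  (Rstar L k x y <-> forall psi, kform k psi -> y psi -> x (dia_star m psi)).
Proof.
move=> Hx Hy. rewrite -(Rle_char normL m Hx Hy).
split; [exact: Rstar_short|exact: Rle_Rstar].
Qed.

Lemma dia_star_truth x a : cpoint L k x -> kform k a ->
  (x (dia_star m a) <-> exists y, Rstar L k x y /\ y a).
Proof.
move=> Hx Ka. rewrite /dia_star (dia_le_truth normL m Hx Ka). split.
  case=> j [Hj /(dia_iter_truth normL j Hx Ka) [y [H1 H2]]].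
  by exists y; split => //; apply: (Rn_Rstar H1).
case=> y [/Rstar_short [j [Hj Hn]] Hy]. exists j; split => //.
apply/(dia_iter_truth normL j Hx Ka). by exists y.
Qed.

Lemma box_star_truth x a : cpoint L k x -> kform k a ->
  (x (box_star m a) <-> forall y, Rstar L k x y -> y a).
Proof.
move=> Hx Ka. have KN : kform k (Neg a) by rewrite kform_Neg.
rewrite /box_star (pt_neg normL Hx) ?kform_dia_star // (dia_star_truth Hx KN).
split.
  move=> H y Hxy. have [_ Hy] := Rstar_pts Hxy.
  case: (pt_compl normL Hy Ka) => // Hn. case: H. by exists y.
move=> H [y [Hxy Hn]]. have [_ Hy] := Rstar_pts Hxy.
exact: (pt_not_both normL Hy (H y Hxy) Hn).
Qed.

End Star.


Section Gen.
Variable n : nat.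
Implicit Types (a b c : form n) (l : seq (form n)) (x y z : form n -> Prop).

Lemma kform_subst k s a : (forall j, kform k (s j)) -> kform k (subst s a).
Proof. move=> H. elim: a => [p| |a IHa b IHb|i a IHa] //=; by rewrite ?IHa ?IHb. Qed.

Lemma subst_comp s t a : subst s (subst t a) = subst (fun j => subst s (t j)) a.
Proof. by elim: a => [p| |a IHa b IHb|i a IHa] //=; rewrite ?IHa ?IHb. Qed.

Definition sid k : nat -> form n := fun j => if j < k then Var n j else Bot.
Lemma sid_k k j : kform k (sid k j).
Proof. rewrite /sid. by case: ifP => /=. Qed.
Lemma subst_sid k a : kform k a -> subst (sid k) a = a.
Proof.
elim: a => [p| |a IHa b IHb|i a IHa] //=.
- by rewrite /sid => ->.
- by case/andP => /IHa -> /IHb ->.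
- by move/IHa ->.
Qed.

Lemma ext_normal (L : logic n) A : normal (ext L A).
Proof.
split.
- move=> a Ha L' nL' _ _. exact: (Ltaut nL').
- move=> i a b L' nL' _ _. exact: (LK nL').
- move=> a b H1 H2 L' nL' HL HA. exact: (Lmp nL' (H1 L' nL' HL HA) (H2 L' nL' HL HA)).
- move=> i a H L' nL' HL HA. exact: (Lnec nL' i (H L' nL' HL HA)).
- move=> s a H L' nL' HL HA. exact: (Lsubst nL' s (H L' nL' HL HA)).
Qed.
Lemma ext_incl (L : logic n) A a : L a -> ext L A a.
Proof. by move=> H L' _ HL _; apply: HL. Qed.
Lemma ext_ax (L : logic n) A : ext L A A.
Proof. by move=> L' _ _ HA. Qed.

Lemma neg_bigOr (Lg : logic n) : normal Lg -> forall l, (forall d, List.In d l -> Lg (Neg d)) -> Lg (Neg (bigOr l)).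
Proof.
move=> nL. elim=> [|d l IH] H /=; first by apply: (Ltaut nL); tauto_peval.
have H1 := H d (or_introl erefl). have H2 : Lg (Neg (bigOr l)) by apply: IH => e He; apply: H; right.
apply: (Ltaut2 nL H1 H2). tauto_peval.
Qed.

Lemma neg_dia_iter (Lg : logic n) : normal Lg -> forall j c, Lg (Neg c) -> Lg (Neg (dia_iter j c)).
Proof.
move=> nL j. elim: j => [|j IH] c Hc //. rewrite dia_iter_S.
have {}Hc := IH c Hc. rewrite /dia_any. apply: (neg_bigOr nL) => d /In_map_iff [i [_ ->]].
have H := Lnec nL i Hc. apply: (Ltaut1 nL H). rewrite /Dia. tauto_peval.
Qed.

Lemma nec_star (Lg : logic n) m a : normal Lg -> Lg a -> Lg (box_star m a).
Proof.
move=> nL Ha. have Hn : Lg (Neg (Neg a)) by apply: (Ltaut1 nL Ha); tauto_peval.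
rewrite /box_star /dia_star /dia_le. apply: (neg_bigOr nL) => d /In_map_iff [j [_ ->]].
exact: (neg_dia_iter nL).
Qed.

End Gen.

Section Depth.
Variable n : nat.
Implicit Types (a b c : form n) (l : seq (form n)) (x y z w v : form n -> Prop).
Variable L : logic n.
Hypothesis normL : normal L.
Variable k : nat.
Variable m : nat.
Hypothesis Hpt : pretrans_at L m.

Lemma d_mono x i j : depth_le L k x i -> i <= j -> depth_le L k x j.
Proof.
move=> H Hij [y [H0 Hy]]. apply: H. exists y; split => // j' Hj'. apply: Hy.
exact: leq_trans Hj' Hij.
Qed.

Lemma d_up x w i : depth_le L k x i -> Rstar L k x w -> depth_le L k w i.
Proof.
move=> H Hxw [y [H0 Hy]]. apply: H. exists y; split => //. exact: (Rstar_trans Hxw H0).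
Qed.

Lemma d_strict x v i : Rstar L k x v -> ~ Rstar L k v x -> depth_le L k x i.+1 -> depth_le L k v i.
Proof.
move=> Hxv Hvx H [y [H0 Hy]]. apply: H.
exists (fun j => if j is j'.+1 then y j' else x); split.
  constructor. by case: (Rstar_pts Hxv).
case=> [|j] Hj /=.
  split; first exact: (Rstar_trans Hxv H0).
  move=> Hyx. apply: Hvx. exact: (Rstar_trans H0 Hyx).
exact: Hy.
Qed.

Lemma d_pos x : cpoint L k x -> ~ depth_le L k x 0.
Proof. move=> Hx H. apply: H. exists (fun _ => x); split => //. by constructor. Qed.

Lemma d_exact x d : cpoint L k x -> depth_le L k x d ->
  exists i, i < d /\ depth_le L k x i.+1 /\ ~ depth_le L k x i.
Proof.
move=> Hx. elim: d => [|d IH] H; first by case: (d_pos Hx H).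
case: (classic (depth_le L k x d)) => Hd.
  have [i [H1 H2]] := IH Hd. exists i; split => //. exact: ltnW.
by exists d.
Qed.

Lemma subst_Bform_S s i :
  subst s (Bform n m i.+1) =
  Imp (s i.+1) (box_star m (Or (dia_star m (s i.+1)) (subst s (Bform n m i)))).
Proof.
change (Imp (s i.+1) (subst s (box_star m (Or (dia_star m (Var n i.+1)) (Bform n m i)))) = Imp (s i.+1) (box_star m (Or (dia_star m (s i.+1)) (subst s (Bform n m i))))).
rewrite subst_box_star.
change (Imp (s i.+1) (box_star m (Or (subst s (dia_star m (Var n i.+1))) (subst s (Bform n m i)))) = Imp (s i.+1) (box_star m (Or (dia_star m (s i.+1)) (subst s (Bform n m i))))).
by rewrite subst_dia_star.
Qed.

Lemma Bform_true i : forall v s, cpoint L k v -> depth_le L k v i ->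
  (forall j, kform k (s j)) -> v (subst s (Bform n m i)).
Proof.
elim: i => [|i IH] v s Hv Hd Hs; first by case: (d_pos Hv Hd).
have Ksi := Hs i.+1.
have KB : forall j, kform k (subst s (Bform n m j)) by move=> j; exact: kform_subst.
have KO : kform k (Or (dia_star m (s i.+1)) (subst s (Bform n m i))).
  change (kform k (dia_star m (s i.+1)) && true && kform k (subst s (Bform n m i))).
  by rewrite kform_dia_star ?KB.
rewrite subst_Bform_S (pt_imp normL Hv) //; last exact: kform_box_star.
move=> Hsv. apply/(box_star_truth normL Hpt Hv KO) => w Hvw.
have [_ Hw] := Rstar_pts Hvw.
rewrite (pt_or normL Hw) ?kform_dia_star //.
case: (classic (Rstar L k w v)) => Hwv.
  left. apply/(dia_star_truth normL Hpt Hw Ksi). by exists v.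
right. apply: IH => //. exact: (d_strict Hvw Hwv).
Qed.

Lemma Bform_agree i s s' : (forall j, j <= i -> s j = s' j) ->
  subst s (Bform n m i) = subst s' (Bform n m i).
Proof.
elim: i => [|i IH] H //. rewrite !subst_Bform_S H // IH // => j Hj.
apply: H. exact: leq_trans Hj (leqnSn _).
Qed.

Lemma Bform_fail i : forall y : nat -> (form n -> Prop), cpoint L k (y 0) ->
  (forall j, j < i -> Rstar L k (y j) (y j.+1) /\ ~ Rstar L k (y j.+1) (y j)) ->
  exists s, (forall j, kform k (s j)) /\ ~ y 0 (subst s (Bform n m i)).
Proof.
elim: i => [|i IH] y H0 Hy.
  exists (fun _ => Bot); split => //. exact: (pt_bot normL H0).
have [H01 H10] := Hy 0 (ltn0Sn _).
have [_ H1] := Rstar_pts H01.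
have [s' [Ks' Hs']] : exists s, (forall j, kform k (s j)) /\ ~ y 1 (subst s (Bform n m i)).
  apply: (IH (fun j => y j.+1)) => // j Hj. exact: Hy.
have [psi [Kp [Hp Hd]]] : exists psi, kform k psi /\ y 0 psi /\ ~ y 1 (dia_star m psi).
  apply: NNPP => Hno. apply: H10. apply/(Rstar_char normL Hpt H1 H0) => psi Kp Hp.
  apply: NNPP => Hd. apply: Hno. by exists psi.
pose s := fun j => if j == i.+1 then psi else s' j.
have Ks : forall j, kform k (s j) by move=> j; rewrite /s; case: ifP.
have Eagree : subst s (Bform n m i) = subst s' (Bform n m i).
  apply: Bform_agree => j Hj. rewrite /s. case: eqP => // Ej. by rewrite Ej ltnn in Hj.
exists s; split => //.
have KO : kform k (Or (dia_star m (s i.+1)) (subst s (Bform n m i))).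
  change (kform k (dia_star m (s i.+1)) && true && kform k (subst s (Bform n m i))).
  by rewrite kform_dia_star ?Ks // kform_subst.
rewrite subst_Bform_S (pt_imp normL H0) ?Ks //; last exact: kform_box_star.
have Esi : s i.+1 = psi by rewrite /s eqxx.
rewrite Esi in KO *. move=> /(_ Hp) /(box_star_truth normL Hpt H0 KO) /(_ _ H01).
rewrite (pt_or normL H1) ?kform_dia_star //; last by rewrite Eagree kform_subst.
by rewrite Eagree; case.
Qed.

Lemma Lh_points h x : cpoint L k x ->
  ((forall a, kform k a -> Lh L m h a -> x a) <-> depth_le L k x h).
Proof.
move=> Hx; split.
  move=> H [y [H0 Hy]].
  have [_ Hy0] := Rstar_pts H0.
  have [s [Ks Hs]] := Bform_fail Hy0 Hy.
  have KB : kform k (subst s (box_star m (Bform n m h))) by exact: kform_subst.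
  have Hl : Lh L m h (subst s (box_star m (Bform n m h))).
    apply: (Lsubst (ext_normal L (Bform n m h))). apply: (nec_star m (ext_normal _ _)).
    exact: ext_ax.
  have := H _ KB Hl. rewrite subst_box_star.
  move/(box_star_truth normL Hpt Hx (kform_subst _ Ks)) => /(_ _ H0). exact: Hs.
move=> Hd a Ka Ha.
pose Lam := fun a => forall s, (forall j, kform k (s j)) -> forall w, Rstar L k x w -> w (subst s a).
have LLam : forall a, L a -> Lam a.
  move=> b Hb s Ks w Hw. have [_ Hw'] := Rstar_pts Hw.
  apply: (pt_thm normL Hw'); first exact: kform_subst. exact: (Lsubst normL).
have nLam : normal Lam.
  split.
  - move=> b Hb; apply: LLam; exact: (Ltaut normL).
  - move=> i b c; apply: LLam; exact: (LK normL).
  - move=> b c H1 H2 s Ks w Hw. have [_ Hw'] := Rstar_pts Hw.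
    have := H1 s Ks w Hw. rewrite /= (pt_imp normL Hw') ?kform_subst //. apply. exact: H2.
  - move=> i b H s Ks w Hw. have [_ Hw'] := Rstar_pts Hw.
    rewrite /= (box_truth normL i Hw') ?kform_subst // => z Hz.
    apply: H => //. apply: (Rstar_Rc Hw). by exists i.
  - move=> t b H s Ks w Hw. rewrite subst_comp. apply: H => // j. exact: kform_subst.
have : Lam a.
  apply: (Ha Lam nLam LLam).
  move=> s Ks w Hw. have [_ Hw'] := Rstar_pts Hw. apply: Bform_true => //.
  exact: (d_up Hd Hw).
move=> /(_ (@sid n k) (@sid_k n k) x). rewrite subst_sid //. apply. by constructor.
Qed.

Lemma completeness (Lg : logic n) phi : normal Lg -> (forall a, L a -> Lg a) ->
  kform k phi -> ~ Lg phi ->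
  exists x, cpoint L k x /\ (forall a, kform k a -> Lg a -> x a) /\ ~ x phi.
Proof.
move=> nLg HLg Kp Hp.
have [x [Hx HG]] : exists x, cpoint Lg k x /\ forall c, c = Neg phi -> x c.
  apply: (@lindenbaum _ Lg k (fun c => c = Neg phi)); first by move=> c /= Hc; rewrite Hc /= andbT.
  move=> l Hl HL. apply: Hp. apply: (Ltaut1 nLg HL) => f /=. rewrite peval_bigAnd.
  case E: (peval f phi); first by rewrite implybT.
  have -> : all (peval f) l by apply/all_In => c Hc; rewrite (Hl c Hc) /= E.
  by [].
have Hn : x (Neg phi) by apply: HG.
exists x; split; last split.
- split.
  + by case: Hx.
  + move=> l Hl HL. apply: (pt_consist Hx Hl). exact: HLg.
  + move=> y Ky Cy Hxy a Ha. have Ka := Ky a Ha.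
    case: (pt_compl nLg Hx Ka) => // Hna. case: (Cy [:: a; Neg a]).
      by move=> c [<-|[<-|]] //; apply: Hxy.
    apply: (Ltaut normL); tauto_peval.
- move=> a Ka Ha. exact: (pt_thm nLg Hx Ka Ha).
- move=> H. exact: (pt_not_both nLg Hx H Hn).
Qed.

End Depth.


Definition pb (P : Prop) : bool := if excluded_middle_informative P then true else false.
Lemma pbP (P : Prop) : pb P = true <-> P.
Proof. rewrite /pb. by case: excluded_middle_informative. Qed.

Lemma In_filter (T : Type) (p : pred T) (l : seq T) a :
  List.In a (filter p l) <-> List.In a l /\ p a.
Proof.
elim: l => [|b l IH] /=; first by split => [|[]].
case E: (p b) => /=.
  rewrite IH. split; first by case=> [<-|[H1 H2]]; split => //; [left|right].
  by case=> [[<-|H1] H2]; [left|right].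
rewrite IH. split; first by case=> H1 H2; split => //; right.
by case=> [[<-|H1] H2]; [rewrite E in H2|].
Qed.

Lemma In_cat_r (T : Type) (l1 l2 : seq T) b : List.In b l2 -> List.In b (l1 ++ l2).
Proof. elim: l1 => [|a l1 IH] //= H. right; exact: IH. Qed.

Lemma In_cat_l (T : Type) (l1 l2 : seq T) b : List.In b l1 -> List.In b (l1 ++ l2).
Proof. elim: l1 => [|a l1 IH] //= [->|H]; [by left|right; exact: IH]. Qed.

Lemma map_eq_In (A B : Type) (f g : A -> B) (l : seq A) a :
  map f l = map g l -> List.In a l -> f a = g a.
Proof. elim: l => [|b l IH] //= [E1 E2] [<-|H] //. exact: IH. Qed.

Fixpoint allb (N : nat) : seq (seq bool) :=
  match N with
  | 0 => [:: [::]]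
  | N'.+1 => [seq b :: s | b <- [:: true; false], s <- allb N']
  end.

Lemma allb_In (s : seq bool) : List.In s (allb (size s)).
Proof.
elim: s => [|b s IH] /=; first by left.
apply/In_mem. rewrite mem_cat. apply/orP.
case: b; [left|right]; rewrite ?cats0; apply/mapP; exists s => //; exact/In_mem.
Qed.

Lemma size_map_pb (T : Type) (f : T -> Prop) (l : seq T) : size [seq pb (f a) | a <- l] = size l.
Proof. by rewrite size_map. Qed.

Section Tab.
Variable n : nat.
Implicit Types (a b c : form n) (l : seq (form n)) (x y z w v u : form n -> Prop).
Variable L : logic n.
Hypothesis normL : normal L.
Variable k : nat.
Variable m : nat.
Hypothesis Hpt : pretrans_at L m.
Variable h : nat.
Variable reps : seq (form n).
Hypothesis Kreps : all (kform k) reps.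
Hypothesis Hreps : forall a, kform k a -> exists2 b, List.In b reps & Lh L m h (Iff a b).

Lemma kform_And a b : kform k (And a b) = kform k a && kform k b.
Proof. by rewrite /= !andbT. Qed.

Definition Dh x := cpoint L k x /\ depth_le L k x h.

Definition Pl : seq (form n) := [seq Var n j | j <- iota 0 k] ++ reps.
Lemma KPl : all (kform k) Pl.
Proof.
rewrite all_cat Kreps andbT. apply/all_In => c /In_map_iff [j [Hj ->]] /=.
by move/In_mem: Hj; rewrite mem_iota add0n.
Qed.

Definition pat x : seq bool := [seq pb (x a) | a <- Pl].

Definition lit (bb : bool) a := if bb then a else Neg a.
Definition epsl (pi : seq bool) (Q : seq (form n)) :=
  bigAnd [seq lit ba.1 ba.2 | ba <- zip pi Q].
Definition eps pi := epsl pi Pl.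

Lemma kform_epsl pi Q : all (kform k) Q -> kform k (epsl pi Q).
Proof.
rewrite /epsl kform_bigAnd. elim: Q pi => [|a Q IH] [|bb pi] //= /andP [Ka KQ].
rewrite IH // andbT. by case: bb => //=; rewrite andbT.
Qed.
Lemma kform_eps pi : kform k (eps pi).
Proof. apply: kform_epsl. exact: KPl. Qed.

Lemma epsl_truth x pi Q : cpoint L k x -> all (kform k) Q -> size pi = size Q ->
  (x (epsl pi Q) <-> [seq pb (x a) | a <- Q] = pi).
Proof.
move=> Hx. rewrite /epsl. elim: Q pi => [|a Q IH] [|bb pi] //= KQ.
  move=> _. split => // _. apply: (pt_thm normL Hx) => //. apply: (Ltaut normL); tauto_peval.
case/andP: KQ => Ka KQ [Hs].
have Klit : kform k (lit bb a) by case: bb => //=; rewrite andbT.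
have Kr : kform k (bigAnd [seq lit ba.1 ba.2 | ba <- zip pi Q]).
  have := kform_epsl pi KQ. by rewrite /epsl.
rewrite (pt_and normL Hx Klit Kr) IH //.
have -> : x (lit bb a) <-> pb (x a) = bb.
  clear Klit Hs. case: bb => /=.
    by split; [move=> H; apply/pbP|move/pbP].
  rewrite (pt_neg normL Hx Ka).
  split => [H|H Hxa]; first by case E: (pb (x a)) => //; move/pbP: E.
  by move/pbP: Hxa; rewrite H.
split; first by case=> -> ->.
by case=> -> ->.
Qed.

Lemma eps_truth x pi : cpoint L k x -> size pi = size Pl -> (x (eps pi) <-> pat x = pi).
Proof. move=> Hx Hs. exact: (epsl_truth Hx KPl Hs). Qed.

Lemma size_pat x : size (pat x) = size Pl.
Proof. by rewrite size_map. Qed.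

Lemma Dh_Iff x a : Dh x -> kform k a -> forall b, List.In b reps -> Lh L m h (Iff a b) ->
  (x a <-> x b).
Proof.
move=> [Hx Hd] Ka b Hb Hl.
have Kb : kform k b by move/all_In: Kreps; apply.
have KI : kform k (Iff a b) by rewrite /= Ka Kb.
have := (proj2 (Lh_points normL Hpt h Hx) Hd) _ KI Hl.
rewrite /Iff (pt_and normL Hx) ?(pt_imp normL Hx) //= ?Ka ?Kb //.
Qed.

Lemma Dh_inj x y : Dh x -> Dh y -> pat x = pat y -> x = y.
Proof.
move=> Dx Dy Hp. apply: functional_extensionality => a. apply: propositional_extensionality.
have [Hx _] := Dx. have [Hy _] := Dy.
case Ka : (kform k a); last first.
  split => H; [move: (pt_kset Hx H)|move: (pt_kset Hy H)]; by rewrite Ka.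
have [b Hb Hl] := Hreps Ka.
rewrite (Dh_Iff Dx Ka Hb Hl) (Dh_Iff Dy Ka Hb Hl).
have HbP : List.In b Pl by apply: In_cat_r.
have := map_eq_In Hp HbP. move=> E.
split => H; [apply/pbP; rewrite -E; exact/pbP|apply/pbP; rewrite E; exact/pbP].
Qed.

Definition Qs : seq (seq bool) :=
  filter (fun pi => pb (exists x, Dh x /\ pat x = pi)) (allb (size Pl)).

Lemma Qs_In pi : List.In pi Qs <-> exists x, Dh x /\ pat x = pi.
Proof.
rewrite In_filter. split; first by case=> _ /pbP.
case=> x [Hx Hp]; split; last by apply/pbP; exists x.
rewrite -Hp -(size_pat x). exact: allb_In.
Qed.

Lemma pat_Qs x : Dh x -> List.In (pat x) Qs.
Proof. move=> Hx. apply/Qs_In. by exists x. Qed.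

Definition zz pi : form n -> Prop :=
  epsilon (inhabits (fun _ => False)) (fun x => Dh x /\ pat x = pi).

Lemma zz_spec pi : List.In pi Qs -> Dh (zz pi) /\ pat (zz pi) = pi.
Proof. move/Qs_In => H. exact: (epsilon_spec _ (fun x => Dh x /\ pat x = pi) H). Qed.

Lemma zz_pat x : Dh x -> zz (pat x) = x.
Proof.
move=> Hx. have [H1 H2] := zz_spec (pat_Qs Hx). exact: Dh_inj.
Qed.

Lemma Dh_up x y : Dh x -> Rstar L k x y -> Dh y.
Proof.
move=> [Hx Hd] Hxy. split; first by case: (Rstar_pts Hxy).
exact: (d_up Hd Hxy).
Qed.

Definition rb (i : 'I_n) pi pi' := pb (Ri L k i (zz pi) (zz pi')).

Definition Succ i pi := bigOr [seq eps pi' | pi' <- Qs & rb i pi pi'].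
Definition Dcl i pi := And (Box i (Succ i pi)) (bigAnd [seq Dia i (eps pi') | pi' <- Qs & rb i pi pi']).
Definition D1 pi := bigAnd [seq Dcl i pi | i <- enum 'I_n].
Definition Delta := And (box_star m (bigOr [seq eps pi | pi <- Qs]))
   (bigAnd [seq box_star m (Imp (eps pi) (D1 pi)) | pi <- Qs]).

Lemma kform_Succ i pi : kform k (Succ i pi).
Proof. rewrite /Succ kform_bigOr. apply/all_In => c /In_map_iff [d [_ ->]]. exact: kform_eps. Qed.
Lemma kform_Dcl i pi : kform k (Dcl i pi).
Proof.
Proof.
rewrite /Dcl kform_And (_ : kform k (Box i (Succ i pi)) = kform k (Succ i pi)) // kform_Succ kform_bigAnd.
apply/all_In => c /In_map_iff [d [_ ->]].
by rewrite kform_Dia kform_eps.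
Qed.
Lemma kform_D1 pi : kform k (D1 pi).
Proof. rewrite /D1 kform_bigAnd. apply/all_In => c /In_map_iff [d [_ ->]]. exact: kform_Dcl. Qed.
Lemma kform_Delta : kform k Delta.
Proof.
rewrite /Delta kform_And kform_box_star; last first.
  rewrite kform_bigOr. apply/all_In => c /In_map_iff [d [_ ->]]. exact: kform_eps.
rewrite kform_bigAnd. apply/all_In => c /In_map_iff [d [_ ->]].
by apply: kform_box_star; rewrite /= kform_eps kform_D1.
Qed.

Lemma D1_truth w pi : cpoint L k w -> (w (D1 pi) <-> forall i,
  (forall u, Ri L k i w u -> exists2 pi', List.In pi' Qs /\ rb i pi pi' & u (eps pi')) /\
  (forall pi', List.In pi' Qs -> rb i pi pi' -> w (Dia i (eps pi')))).
Proof.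
move=> Hw.
have KD : all (kform k) [seq Dcl i pi | i <- enum 'I_n].
  apply/all_In => c /In_map_iff [d [_ ->]]. exact: kform_Dcl.
rewrite /D1 (pt_bigAnd normL Hw KD).
have KS : forall i, all (kform k) [seq eps pi' | pi' <- Qs & rb i pi pi'].
  move=> i. apply/all_In => c /In_map_iff [d [_ ->]]. exact: kform_eps.
have KDi : forall i, all (kform k) [seq Dia i (eps pi') | pi' <- Qs & rb i pi pi'].
  move=> i. apply/all_In => c /In_map_iff [d [_ ->]]. by rewrite kform_Dia kform_eps.
have Hcl : forall i, w (Dcl i pi) <-> 
  ((forall u, Ri L k i w u -> exists2 pi', List.In pi' Qs /\ rb i pi pi' & u (eps pi')) /\
  (forall pi', List.In pi' Qs -> rb i pi pi' -> w (Dia i (eps pi')))).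
  move=> i.
  have KBx : kform k (Box i (Succ i pi)) by exact: kform_Succ.
  have KBD : kform k (bigAnd [seq Dia i (eps pi') | pi' <- Qs & rb i pi pi']) by rewrite kform_bigAnd.
  rewrite /Dcl (pt_and normL Hw KBx KBD).
  rewrite (box_truth normL i Hw (kform_Succ i pi)) (pt_bigAnd normL Hw (KDi i)).
  split.
    case=> H1 H2; split.
      move=> u Hu. have [_ [Hu' _]] := Hu.
      have := H1 u Hu. rewrite /Succ (pt_bigOr normL Hu' (KS i)).
      case=> c [/In_map_iff [d [/In_filter [Hd1 Hd2] ->]] Hc]. by exists d.
    move=> pi' H1' H2'. apply: H2. apply/In_map_iff. exists pi'; split => //.
    exact/In_filter.
  case=> H1 H2; split.
    move=> u Hu. have [_ [Hu' _]] := Hu.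
    rewrite /Succ (pt_bigOr normL Hu' (KS i)).
    case: (H1 u Hu) => pi' [Hq Hr] He. exists (eps pi'); split => //.
    apply/In_map_iff. exists pi'; split => //. exact/In_filter.
  move=> c /In_map_iff [d [/In_filter [Hd1 Hd2] ->]]. exact: H2.
split.
  move=> H i. apply/Hcl. apply: H. apply/In_map_iff. exists i; split => //.
  by apply/In_mem; rewrite mem_enum.
move=> H c /In_map_iff [i [_ ->]]. exact/Hcl.
Qed.

Lemma Delta_truth w : cpoint L k w -> (w Delta <->
  (forall v, Rstar L k w v -> exists2 pi, List.In pi Qs & v (eps pi)) /\
  (forall pi, List.In pi Qs -> forall v, Rstar L k w v -> v (eps pi) -> v (D1 pi))).
Proof.
move=> Hw.
have K1 : all (kform k) [seq eps pi | pi <- Qs].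
  apply/all_In => c /In_map_iff [d [_ ->]]. exact: kform_eps.
have KB : kform k (bigOr [seq eps pi | pi <- Qs]) by rewrite kform_bigOr.
have K2 : all (kform k) [seq box_star m (Imp (eps pi) (D1 pi)) | pi <- Qs].
  apply/all_In => c /In_map_iff [d [_ ->]].
  by apply: kform_box_star; rewrite /= kform_eps kform_D1.
rewrite /Delta (pt_and normL Hw) ?kform_box_star ?kform_bigAnd //.
rewrite (box_star_truth normL Hpt Hw KB) (pt_bigAnd normL Hw K2).
have E1 : (forall y, Rstar L k w y -> y (bigOr [seq eps pi | pi <- Qs])) <->
   (forall v, Rstar L k w v -> exists2 pi, List.In pi Qs & v (eps pi)).
  split => H v Hv; have [_ Hv'] := Rstar_pts Hv; move: (H v Hv).
    rewrite (pt_bigOr normL Hv' K1). case=> c [/In_map_iff [d [Hd ->]] Hc]. by exists d.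
  rewrite (pt_bigOr normL Hv' K1). case=> d Hd Hc. exists (eps d); split => //.
  apply/In_map_iff. by exists d.
rewrite E1.
have E2 : subl w [seq box_star m (Imp (eps pi) (D1 pi)) | pi <- Qs] <->
  (forall pi, List.In pi Qs -> forall v, Rstar L k w v -> v (eps pi) -> v (D1 pi)).
  split.
    move=> H pi Hpi v Hv. have [_ Hv'] := Rstar_pts Hv.
    have KI : kform k (Imp (eps pi) (D1 pi)) by rewrite /= kform_eps kform_D1.
    have Hin : List.In (box_star m (Imp (eps pi) (D1 pi))) [seq box_star m (Imp (eps pi) (D1 pi)) | pi <- Qs].
      apply/In_map_iff. by exists pi.
    have := H _ Hin.
    rewrite (box_star_truth normL Hpt Hw KI).
    move=> /(_ _ Hv). rewrite (pt_imp normL Hv') ?kform_eps ?kform_D1 //.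
  move=> H c /In_map_iff [pi [Hpi ->]].
  have KI : kform k (Imp (eps pi) (D1 pi)) by rewrite /= kform_eps kform_D1.
  apply/(box_star_truth normL Hpt Hw KI) => v Hv. have [_ Hv'] := Rstar_pts Hv.
  rewrite (pt_imp normL Hv') ?kform_eps ?kform_D1 //. exact: H.
by rewrite E2.
Qed.

Lemma Qs_size pi : List.In pi Qs -> size pi = size Pl.
Proof. case/Qs_In => y [_ <-]. exact: size_pat. Qed.

Lemma Qs_eps w pi : cpoint L k w -> List.In pi Qs -> w (eps pi) -> pat w = pi.
Proof. move=> Hw Hq. by move/(eps_truth Hw (Qs_size Hq)). Qed.

Lemma Var_Pl p : p < k -> List.In (Var n p) Pl.
Proof.
move=> Hp. apply: In_cat_l. apply/In_map_iff. exists p; split => //.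
by apply/In_mem; rewrite mem_iota add0n.
Qed.

Lemma Delta_sound x : cpoint L k x -> x Delta -> Dh x.
Proof.
move=> Hx HD. have [D1x D2x] := (Delta_truth Hx).1 HD.
have Hq : forall w, Rstar L k x w -> List.In (pat w) Qs.
  move=> w Hw. have [_ Hw'] := Rstar_pts Hw. case: (D1x w Hw) => pi Hpi He.
  by rewrite (Qs_eps Hw' Hpi He).
have HD1 : forall w, Rstar L k x w -> w (D1 (pat w)).
  move=> w Hw. have [_ Hw'] := Rstar_pts Hw. apply: (D2x _ (Hq w Hw) w Hw).
  by apply/(eps_truth Hw' (size_pat w)).
have Hf : forall w, Rstar L k x w -> Dh (zz (pat w)) /\ pat (zz (pat w)) = pat w.
  move=> w Hw. exact: zz_spec (Hq w Hw).
have Claim : forall a, kform k a -> forall w, Rstar L k x w -> (w a <-> zz (pat w) a).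
  elim=> [p| |a IHa b IHb|i a IHa] Ka w Hw; have [_ Hw'] := Rstar_pts Hw;
    have [[Hfw Hdf] Hpf] := Hf w Hw.
  - have E := map_eq_In Hpf (Var_Pl Ka).
    split => H; apply/pbP; [rewrite E|rewrite -E]; exact/pbP.
  - split => H; [case: (pt_bot normL Hw' H)|case: (pt_bot normL Hfw H)].
  - case/andP: Ka => Ka Kb.
    rewrite (pt_imp normL Hw' Ka Kb) (pt_imp normL Hfw Ka Kb) (IHa Ka w Hw) (IHb Kb w Hw).
    by [].
  - have {}Ka : kform k a := Ka.
    rewrite (box_truth normL i Hw' Ka) (box_truth normL i Hfw Ka).
    have [Hfo Hba] := (D1_truth (pat w) Hw').1 (HD1 w Hw) i.
    split.
    + move=> H u' Hu'. have [_ [Hu'p _]] := Hu'.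
      have Du' : Dh u'.
        apply: (Dh_up (conj Hfw Hdf)). apply: (Rstar_step (ex_intro _ i Hu')). by constructor.
      have Hzu' := zz_pat Du'.
      have Hrb : rb i (pat w) (pat u') by apply/pbP; rewrite Hzu'.
      have Hdia := Hba (pat u') (pat_Qs Du') Hrb.
      have [u [Hu Hue]] := exists_succ normL Hw' (kform_eps (pat u')) Hdia.
      have [_ [Hup _]] := Hu.
      have Epu := Qs_eps Hup (pat_Qs Du') Hue.
      have Hxu : Rstar L k x u by apply: (Rstar_Rc Hw); exists i.
      have := (IHa Ka u Hxu).1 (H u Hu). by rewrite Epu Hzu'.
    + move=> H u Hu. have [_ [Hup _]] := Hu.
      case: (Hfo u Hu) => pi' [Hq' Hr] He.
      have Epu := Qs_eps Hup Hq' He.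
      have Hxu : Rstar L k x u by apply: (Rstar_Rc Hw); exists i.
      apply/(IHa Ka u Hxu). rewrite Epu. apply: H. exact/pbP.
have [Dz _] := Hf x (Rstar_refl Hx).
have Ex : x = zz (pat x).
  apply: functional_extensionality => a. apply: propositional_extensionality.
  case Ka : (kform k a); first exact: (Claim a Ka x (Rstar_refl Hx)).
  have [Hz _] := Dz.
  split => H; [move: (pt_kset Hx H)|move: (pt_kset Hz H)]; by rewrite Ka.
by rewrite Ex.
Qed.

Lemma Delta_complete x : Dh x -> x Delta.
Proof.
move=> Dx. have [Hx _] := Dx. apply/(Delta_truth Hx). split.
  move=> v Hv. have Dv := Dh_up Dx Hv. have [Hv' _] := Dv.
  exists (pat v); first exact: pat_Qs.
  by apply/(eps_truth Hv' (size_pat v)).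
move=> pi Hpi v Hv He. have Dv := Dh_up Dx Hv. have [Hv' _] := Dv.
have Ep := Qs_eps Hv' Hpi He. subst pi.
apply/(D1_truth (pat v) Hv') => i; split.
  move=> u Hu. have [_ [Hup _]] := Hu.
  have Du : Dh u.
    apply: (Dh_up Dv). apply: (Rstar_step (ex_intro _ i Hu)). by constructor.
  exists (pat u); first split.
  - exact: pat_Qs.
  - apply/pbP. by rewrite !zz_pat.
  - by apply/(eps_truth Hup (size_pat u)).
move=> pi' Hq' Hr. move/pbP: Hr. rewrite zz_pat // => HR.
have [[Hz _] Hpz] := zz_spec Hq'.
case: HR => _ [_ HR]. apply: HR; first exact: kform_eps.
by apply/(eps_truth Hz (Qs_size Hq')).
Qed.

Definition Bik (i : nat) :=
  And Delta (bigOr [seq eps pi | pi <- Qs & pb (depth_le L k (zz pi) i)]).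

Lemma kform_Bik i : kform k (Bik i).
Proof.
rewrite /Bik kform_And kform_Delta kform_bigOr. apply/all_In => c /In_map_iff [d [_ ->]].
exact: kform_eps.
Qed.

Lemma Bik_truth i x : i <= h -> cpoint L k x -> (x (Bik i) <-> depth_le L k x i).
Proof.
move=> Hi Hx.
have KO : all (kform k) [seq eps pi | pi <- Qs & pb (depth_le L k (zz pi) i)].
  apply/all_In => c /In_map_iff [d [_ ->]]. exact: kform_eps.
rewrite /Bik (pt_and normL Hx kform_Delta) ?kform_bigOr // (pt_bigOr normL Hx KO).
split.
  case=> HD [c [/In_map_iff [pi [/In_filter [Hq Hd] ->]] He]].
  have Dx := Delta_sound Hx HD.
  have Ep := Qs_eps Hx Hq He. move/pbP: Hd. by rewrite -Ep zz_pat.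
move=> Hd. have Dx : Dh x by split => //; exact: (d_mono Hd Hi).
split; first exact: Delta_complete.
exists (eps (pat x)); split; last by apply/(eps_truth Hx (size_pat x)).
apply/In_map_iff. exists (pat x); split => //. apply/In_filter; split; first exact: pat_Qs.
apply/pbP. by rewrite zz_pat.
Qed.

End Tab.


Section Part2.
Variable n : nat.
Implicit Types (a b c : form n) (l : seq (form n)) (x y z w v u : form n -> Prop).
Variable L : logic n.
Hypothesis normL : normal L.
Variable k : nat.
Variable m : nat.
Hypothesis Hpt : pretrans_at L m.

Lemma box_star_up p q c : cpoint L k p -> kform k c -> p (box_star m c) -> Rstar L k p q ->
  q (box_star m c).
Proof.
move=> Hp Kc Hc Hpq. have [_ Hq] := Rstar_pts Hpq.
apply/(box_star_truth normL Hpt Hq Kc) => r Hqr.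
exact: (box_star_truth normL Hpt Hp Kc).1 Hc r (Rstar_trans Hpq Hqr).
Qed.

Lemma not_dia_box p psi : cpoint L k p -> kform k psi -> ~ p (dia_star m psi) ->
  p (box_star m (Neg psi)).
Proof.
move=> Hp Kp H. have KN : kform k (Neg psi) by rewrite kform_Neg.
apply/(box_star_truth normL Hpt Hp KN) => r Hr. have [_ Hr'] := Rstar_pts Hr.
apply/(pt_neg normL Hr' Kp) => Hrp. apply: H.
apply/(dia_star_truth normL Hpt Hp Kp). by exists r.
Qed.

Section MaxS.
Variable B : form n.
Hypothesis KB : kform k B.
Variable x : form n -> Prop.
Hypothesis Hx : cpoint L k x.
Hypothesis HxB : ~ x B.

Definition stP (j : nat) (q : form n -> Prop) : (form n -> Prop) -> Prop := fun w =>
  Rstar L k q w /\ ~ w B /\ kform k (fenum n j) /\ ~ w (dia_star m (fenum n j)).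

Definition st (j : nat) (q : form n -> Prop) : form n -> Prop :=
  if excluded_middle_informative (exists w, stP j q w)
  then epsilon (inhabits (fun _ => False)) (stP j q) else q.

Fixpoint sq (j : nat) : form n -> Prop :=
  match j with 0 => x | j'.+1 => st j' (sq j') end.

Lemma sq_step j : Rstar L k (sq j) (sq j.+1) /\ ~ sq j.+1 B.
Proof.
have gen : forall j q, cpoint L k q -> ~ q B -> Rstar L k q (st j q) /\ ~ st j q B.
  move=> j0 q Hq HqB. rewrite /st. case: excluded_middle_informative => H.
    have := epsilon_spec (inhabits (fun _ : form n => False)) (stP j0 q) H. by case=> H1 [H2 _].
  split => //. by constructor.
elim: j => [|j [IH1 IH2]]; first exact: (gen 0 x Hx HxB).
have [_ Hj] := Rstar_pts IH1. exact: (gen j.+1 _ Hj IH2).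
Qed.

Lemma sq_S_cases j : ((exists w, stP j (sq j) w) -> stP j (sq j) (sq j.+1)).
Proof.
move=> H. rewrite [sq j.+1]/= /st. case: excluded_middle_informative => // H'.
exact: (epsilon_spec (inhabits (fun _ : form n => False)) (stP j (sq j)) H').
Qed.

Lemma sq_mono j j' : j <= j' -> Rstar L k (sq j) (sq j').
Proof.
elim: j' => [|j' IH].
  rewrite leqn0 => /eqP ->. by constructor.
rewrite leq_eqVlt => /orP [/eqP ->|Hj].
  constructor. have [H _] := sq_step j'. by case: (Rstar_pts H).
apply: (Rstar_trans (IH Hj)). exact: (sq_step j').1.
Qed.

Lemma sq_pt j : cpoint L k (sq j).
Proof. have [H _] := sq_step j. by case: (Rstar_pts H). Qed.

Definition Gam c := c = Neg B \/ (kform k c /\ exists j, sq j (box_star m c)).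

Lemma Gam_bound l : subl (fun c => kform k c /\ exists j, sq j (box_star m c)) l ->
  exists N, forall c, List.In c l -> sq N (box_star m c).
Proof.
elim: l => [|a l IH] H; first by exists 0.
have [N HN] : exists N, forall c, List.In c l -> sq N (box_star m c).
  by apply: IH => c Hc; apply: H; right.
have [Ka [j Hj]] := H a (or_introl erefl).
exists (maxn N j) => c [<-|Hc].
  apply: (box_star_up (sq_pt j) Ka Hj). apply: sq_mono. exact: leq_maxr.
have [Kc _] := H c (or_intror Hc).
apply: (box_star_up (sq_pt N) Kc (HN c Hc)). apply: sq_mono. exact: leq_maxl.
Qed.

Lemma maxS : exists u, Rstar L k x u /\ ~ u B /\
  forall w, Rstar L k u w -> ~ w B -> Rstar L k w u.
Proof.
have [u [Hu HG]] : exists u, cpoint L k u /\ forall c, Gam c -> u c.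
  apply: lindenbaum; first by move=> c [->|[]] //; rewrite kform_Neg.
  move=> l Hl HL.
  have Hl' : forall c, List.In c l -> (kform k c /\ exists j, sq j (box_star m c)) \/ c = Neg B.
    move=> c /Hl [->|H]; by [right|left].
  have [l' [H1 H2]] := cons_sub Hl'.
  have [N HN] := Gam_bound H1.
  have Kl' : all (kform k) l' by apply/all_In => c /H1 [].
  have HNl : sq N (bigAnd l').
    apply/(pt_bigAnd normL (sq_pt N) Kl') => c Hc. have [Kc _] := H1 c Hc.
    exact: (box_star_truth normL Hpt (sq_pt N) Kc).1 (HN c Hc) _ (Rstar_refl (sq_pt N)).
  have : sq N B.
    apply: (pt_mp normL (sq_pt N) HNl KB). apply: (Ltaut1 normL HL). tauto_with H2.
  have [H0 _] := sq_step N. move: H0. case: N {HN HNl} => [|N] H0 HNB.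
    exact: HxB.
  exact: (sq_step N).2.
have HuB : ~ u B.
  move=> H. have Hn : u (Neg B) by apply: HG; left.
  exact: (pt_not_both normL Hu H Hn).
have Hsq : forall j, Rstar L k (sq j) u.
  move=> j. apply/(Rstar_char normL Hpt (sq_pt j) Hu) => psi Kp Hp.
  apply: NNPP => Hd. have := not_dia_box (sq_pt j) Kp Hd => Hb.
  have : u (Neg psi) by apply: HG; right; split; [rewrite kform_Neg|exists j].
  move=> Hn. exact: (pt_not_both normL Hu Hp Hn).
exists u; split; first exact: (Hsq 0).
split => // w Huw HwB. have [_ Hw] := Rstar_pts Huw.
apply/(Rstar_char normL Hpt Hw Hu) => psi Kp Hp.
have [j Ej] := fenum_surj psi.
case: (classic (exists w, stP j (sq j) w)) => Hex.
  have [H1 [H2 [H3 H4]]] := sq_S_cases Hex.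
  rewrite Ej in H4. have Hb := not_dia_box (sq_pt j.+1) Kp H4.
  have : u (Neg psi) by apply: HG; right; split; [rewrite kform_Neg|exists j.+1].
  move=> Hn. case: (pt_not_both normL Hu Hp Hn).
apply: NNPP => Hd. apply: Hex. exists w. rewrite /stP Ej. split; last by [].
exact: (Rstar_trans (Hsq j) Huw).
Qed.
End MaxS.

Variable h : nat.
Variable Bs : nat -> form n.
Hypothesis HBs : forall i, i <= h -> kform k (Bs i) /\
        forall x, cpoint L k x -> (x (Bs i) <-> depth_le L k x i).
Variable phi : form n.
Hypothesis Kphi : kform k phi.

Definition conjf := bigAnd [seq Imp (box_star m (Imp (box_star m phi) (Bs i))) (Bs i) | i <- iota 0 h.+1].

Lemma kform_conj_el i : i <= h -> kform k (Imp (box_star m (Imp (box_star m phi) (Bs i))) (Bs i)).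
Proof.
move=> Hi. have [KB _] := HBs Hi.
have K1 : kform k (box_star m phi) := kform_box_star m Kphi.
have K2 : kform k (Imp (box_star m phi) (Bs i)).
  change (kform k (box_star m phi) && kform k (Bs i)). by rewrite K1 KB.
have K3 := kform_box_star m K2.
change (kform k (box_star m (Imp (box_star m phi) (Bs i))) && kform k (Bs i)). by rewrite K3 KB.
Qed.

Lemma kform_conj : all (kform k) [seq Imp (box_star m (Imp (box_star m phi) (Bs i))) (Bs i) | i <- iota 0 h.+1].
Proof.
apply/all_In => c /In_map_iff [i [Hi ->]]. apply: kform_conj_el.
by move/In_mem: Hi; rewrite mem_iota add0n ltnS.
Qed.

Lemma part2 : Lh L m h.+1 phi <-> L conjf.
Proof.
have Kc : kform k conjf by rewrite /conjf kform_bigAnd kform_conj.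
have Kels : forall i, i <= h -> kform k (Bs i) /\ kform k (box_star m phi) /\
   kform k (Imp (box_star m phi) (Bs i)) /\ kform k (box_star m (Imp (box_star m phi) (Bs i))).
  move=> i Hi. have [KB _] := HBs Hi.
  have K1 : kform k (box_star m phi) := kform_box_star m Kphi.
  have K2 : kform k (Imp (box_star m phi) (Bs i)).
    change (kform k (box_star m phi) && kform k (Bs i)). by rewrite K1 KB.
  have K3 := kform_box_star m K2.
  by [].
have Hin : forall i, i <= h -> List.In (Imp (box_star m (Imp (box_star m phi) (Bs i))) (Bs i))
    [seq Imp (box_star m (Imp (box_star m phi) (Bs i))) (Bs i) | i <- iota 0 h.+1].
  move=> i Hi. apply/In_map_iff. exists i; split => //.
  by apply/In_mem; rewrite mem_iota add0n ltnS.
split.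
  move=> Hl. apply: NNPP => Hn.
  have [x [Hx [_ Hxc]]] := completeness normL normL (fun a H => H) Kc Hn.
  move: Hxc; rewrite /conjf (pt_bigAnd normL Hx kform_conj) => Hxc.
  have [c [Hinc Hnc]] : exists c, List.In c [seq Imp (box_star m (Imp (box_star m phi) (Bs i))) (Bs i) | i <- iota 0 h.+1] /\ ~ x c.
    apply: NNPP => H. apply: Hxc => c Hc. apply: NNPP => Hnc. apply: H. by exists c.
  move/In_map_iff: Hinc => [i [Hi Ec]]. subst c.
  have Hih : i <= h by move/In_mem: Hi; rewrite mem_iota add0n ltnS.
  have [KB [K1 [K2 K3]]] := Kels i Hih.
  have [_ HB] := HBs Hih.
  rewrite (pt_imp normL Hx K3 KB) in Hnc.
  have H1 : x (box_star m (Imp (box_star m phi) (Bs i))).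
    apply: NNPP => H. apply: Hnc => H'. by case: H.
  have H2 : ~ x (Bs i) by move=> H; apply: Hnc.
  have [u [Hxu [HuB Hmax]]] := maxS KB Hx H2.
  have [_ Hu] := Rstar_pts Hxu.
  have Hdu : depth_le L k u i.+1.
    move=> [y [H0 Hy]]. have [H01 H10] := Hy 0 (ltn0Sn _).
    have Huy1 := Rstar_trans H0 H01. have [_ Hy1] := Rstar_pts Huy1.
    case: (classic (y 1 (Bs i))) => Hb.
      apply: ((HB _ Hy1).1 Hb). exists (fun j => y j.+1); split; first by constructor.
      move=> j Hj. exact: Hy.
    apply: H10. exact: (Rstar_trans (Hmax _ Huy1 Hb) H0).
  have Hphi : u (box_star m phi).
    apply/(box_star_truth normL Hpt Hu Kphi) => w Huw. have [_ Hw] := Rstar_pts Huw.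
    apply: ((Lh_points normL Hpt h.+1 Hw).2 _ _ Kphi Hl).
    apply: (d_mono (d_up Hdu Huw)). by rewrite ltnS.
  have Himp := (box_star_truth normL Hpt Hx K2).1 H1 u Hxu.
  rewrite (pt_imp normL Hu K1 KB) in Himp. exact: (HuB (Himp Hphi)).
move=> Hc. apply: NNPP => Hn.
have [x [Hx [Hth Hxp]]] := completeness normL (ext_normal L (Bform n m h.+1))
   (fun a (H : L a) => @ext_incl n L (Bform n m h.+1) a H) Kphi Hn.
have Hd := (Lh_points normL Hpt h.+1 Hx).1 Hth.
have [i [Hi [Hdi1 Hndi]]] := d_exact Hx Hd.
have Hih : i <= h by rewrite -ltnS.
have [KB [K1 [K2 K3]]] := Kels i Hih.
have [_ HB] := HBs Hih.
have HxB : ~ x (Bs i) by move=> H; apply: Hndi; exact: (HB x Hx).1 H.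
have Hxc : x conjf := pt_thm normL Hx Kc Hc.
have Hel := (pt_bigAnd normL Hx kform_conj).1 Hxc _ (Hin i Hih).
rewrite (pt_imp normL Hx K3 KB) in Hel. apply: HxB. apply: Hel.
apply/(box_star_truth normL Hpt Hx K2) => v Hxv. have [_ Hv] := Rstar_pts Hxv.
rewrite (pt_imp normL Hv K1 KB) => Hvp.
case: (classic (Rstar L k v x)) => Hvx.
  case: Hxp. exact: (box_star_truth normL Hpt Hv Kphi).1 Hvp x Hvx.
exact: (HB v Hv).2 (d_strict Hxv Hvx Hdi1).
Qed.
End Part2.


Theorem theorem4p4 (n : nat) (L : logic n) (m h k : nat) :
  normal L -> least_pretrans L m ->
  ktabular (Lh L m h) k ->
  (forall i, i <= h ->
     exists Bik : form n, kform k Bik /\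
       forall x, cpoint L k x -> (x Bik <-> depth_le L k x i))
  /\
  (forall Bs : nat -> form n,
     (forall i, i <= h -> kform k (Bs i) /\
        forall x, cpoint L k x -> (x (Bs i) <-> depth_le L k x i)) ->
     forall phi : form n, kform k phi ->
       (Lh L m h.+1 phi <->
        L (bigAnd [seq Imp (box_star m (Imp (box_star m phi) (Bs i))) (Bs i)
                  | i <- iota 0 h.+1]))).
Proof.
move=> normL [Hpt _] [reps [Kreps Hreps]]. split.
  move=> i Hi. exists (Bik L k m h reps i). split; first exact: kform_Bik.
  move=> x Hx. exact: (Bik_truth normL Hpt Kreps Hreps Hi Hx).
move=> Bs HBs phi Kphi. exact: (part2 normL Hpt HBs Kphi).
Qed.
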